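(* Let $\xi(s)=\pi^{-s/2}\Gamma(s/2)\zeta(s)$, $\chi(s)=s(s-1)\xi(s)$, $A=\pi/3-1$, and \[ \begin{aligned} Z_2(s) & = (s-2)\chi(2s) \Bigl[ (As + 3)(s-1)^2\chi(s+2) - 2(s-1)(s-3)\chi(s+1) - (s+2)(s-3)\chi(s) \Bigr] \\ & \quad - (s+1) \chi(2s-1) \Bigl[ (As - A - 3)s^2\chi(s-2) + 2s(s+2) \, \chi(s-1) + (s+2)(s-3)\chi(s) \Bigr]. \end{aligned} \] Then $Z_2(s)$ has no zero in the half-plane $\mathrm{Re}(s)\geq 20$. *)

(* Defs.v *)
From Stdlib Require Import Reals.
From Coquelicot Require Import Coquelicot.
Open Scope C_scope.

Definition cexp (z : C) : C :=
  (exp (Re z) * cos (Im z), exp (Re z) * sin (Im z))%R.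

Definition cpowR (x : R) (z : C) : C := cexp (z * RtoC (ln x)).

(* Euler's integral: Gamma z = int_0^oo t^(z-1) e^(-t) dt  (valid for Re z > 0) *)
Definition Gamma (z : C) : C :=
  RInt_gen (V := C_R_CompleteNormedModule)
    (fun t : R => cpowR t (z - 1) * RtoC (exp (- t)))
    (at_right 0) (Rbar_locally p_infty).

(* Dirichlet series: zeta s = sum_{n>=1} n^(-s)  (valid for Re s > 1) *)
Definition zeta (s : C) : C :=
  iota (T := C_CompleteNormedModule)
    (fun l : C => is_series (V := C_NormedModule)
                    (fun n : nat => / cpowR (INR n + 1) s) l).

Definition xi (s : C) : C := cpowR PI (- s / 2) * Gamma (s / 2) * zeta s.

Definition chi (s : C) : C := s * (s - 1) * xi s.

Definition A : C := RtoC (PI / 3 - 1).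

Definition Z2 (s : C) : C :=
  (s - 2) * chi (2 * s) *
    ((A * s + 3) * (s - 1) ^ 2 * chi (s + 2)
     - 2 * (s - 1) * (s - 3) * chi (s + 1)
     - (s + 2) * (s - 3) * chi s)
  - (s + 1) * chi (2 * s - 1) *
    ((A * s - A - 3) * s ^ 2 * chi (s - 2)
     + 2 * s * (s + 2) * chi (s - 1)
     + (s + 2) * (s - 3) * chi s).

(* Main.v *)
Require Import Defs.
From Stdlib Require Import Reals Lra Lia Factorial.
From Coquelicot Require Import Coquelicot.
Open Scope C_scope.

Lemma is_derive_C (f1 f2 : R -> R) (x d1 d2 : R) :
  is_derive f1 x d1 -> is_derive f2 x d2 ->
  is_derive (V:=C_R_NormedModule) (fun t => ((f1 t, f2 t) : C)) x ((d1,d2) : C).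
Proof.
  intros H1 H2. unfold is_derive in *.
  apply (filterdiff_comp'_2 f1 f2 (fun u v => ((u,v):C)) x _ _ (fun u v => ((u,v):C)) H1 H2).
  apply (filterdiff_ext_lin _ (fun t => t)).
  - apply filterdiff_ext with (fun t => t). intros [u v]; reflexivity.
    apply filterdiff_id.
  - intros [u v]; reflexivity.
Qed.

Lemma cpowR_eq (t : R) (z : C) : cpowR t z =
  ((exp (Re z * ln t) * cos (Im z * ln t))%R, (exp (Re z * ln t) * sin (Im z * ln t))%R).
Proof.
  destruct z as [a b]. unfold cpowR, cexp, Cmult, RtoC, Re, Im; simpl.
  f_equal; f_equal; try f_equal; ring.
Qed.

Lemma cexp_add (a b : C) : cexp (a + b) = cexp a * cexp b.
Proof.
  destruct a as [a1 a2], b as [b1 b2]. unfold cexp, Cmult, Cplus; simpl.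
  rewrite exp_plus, cos_plus, sin_plus. f_equal; ring.
Qed.

Lemma cpowR_add (t : R) (a b : C) : cpowR t (a + b) = cpowR t a * cpowR t b.
Proof.
  unfold cpowR. rewrite <- cexp_add. f_equal. ring.
Qed.

Lemma Cmod_cexp (z : C) : Cmod (cexp z) = exp (Re z).
Proof.
  destruct z as [a b]. unfold Cmod, cexp, Re, Im. cbn [fst snd].
  replace ((exp a * cos b) ^ 2 + (exp a * sin b) ^ 2)%R with ((exp a)^2)%R.
  - rewrite sqrt_pow2; auto. left; apply exp_pos.
  - pose proof (sin2_cos2 b). unfold Rsqr in H. nra.
Qed.

Lemma Cmod_cpowR (t : R) (z : C) : Cmod (cpowR t z) = exp (Re z * ln t).
Proof.
  unfold cpowR. rewrite Cmod_cexp. destruct z; simpl. f_equal. ring.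
Qed.

Lemma cexp_nz (z : C) : cexp z <> 0.
Proof.
  intro H. assert (Cmod (cexp z) = 0%R) by (rewrite H; apply Cmod_0).
  rewrite Cmod_cexp in H0. pose proof (exp_pos (Re z)). lra.
Qed.

Lemma cpowR_nz t z : cpowR t z <> 0.
Proof. apply cexp_nz. Qed.

Lemma cpowR_1 (t : R) : (0 < t)%R -> cpowR t 1 = RtoC t.
Proof.
  intros ht. rewrite cpowR_eq. simpl. rewrite Rmult_0_l, cos_0, sin_0, Rmult_1_l, exp_ln; auto.
  unfold RtoC. f_equal; ring.
Qed.

Lemma cpowR_0 (t : R) : cpowR t 0 = 1.
Proof.
  rewrite cpowR_eq. simpl. rewrite !Rmult_0_l, cos_0, sin_0, exp_0. unfold RtoC. f_equal; ring.
Qed.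

Lemma cpowR_mulbase (a b : R) (z : C) : (0 < a)%R -> (0 < b)%R ->
  cpowR (a * b) z = cpowR a z * cpowR b z.
Proof.
  intros. unfold cpowR. rewrite ln_mult; auto. rewrite RtoC_plus, <- cexp_add. f_equal. ring.
Qed.

Lemma cpowR_S (t : R) (z : C) : (0 < t)%R -> cpowR t (z + 1) = t * cpowR t z.
Proof. intros. rewrite cpowR_add, cpowR_1; auto. ring. Qed.

Lemma exp_ln_pred (a t : R) : (0 < t)%R -> (exp (a * ln t) * / t = exp ((a - 1) * ln t))%R.
Proof.
  intros. replace ((a-1) * ln t)%R with (a * ln t + - ln t)%R by ring.
  rewrite exp_plus, exp_Ropp, exp_ln; auto.
Qed.

Lemma cpowR_deriv (t : R) (w : C) : (0 < t)%R ->
  is_derive (V:=C_R_NormedModule) (fun u => cpowR u w) t (w * cpowR t (w - 1)).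
Proof.
  intros ht. destruct w as [a b].
  apply is_derive_ext with (fun u => ((exp (a * ln u) * cos (b * ln u))%R,
                                        (exp (a * ln u) * sin (b * ln u))%R) : C).
  { intros u. rewrite cpowR_eq. reflexivity. }
  replace ((a, b) * cpowR t ((a, b) - 1)) with
    (((exp (a * ln t) * / t * (a * cos (b * ln t)) - exp (a * ln t) * / t * (b * sin (b * ln t)))%R,
      (exp (a * ln t) * / t * (a * sin (b * ln t)) + exp (a * ln t) * / t * (b * cos (b * ln t)))%R) : C).
  2:{ rewrite cpowR_eq. replace (Re ((a, b) - 1)) with (a - 1)%R by (simpl; ring).
      replace (Im ((a, b) - 1)) with b by (simpl; ring).
      rewrite <- exp_ln_pred; auto. unfold Cmult; simpl. f_equal; ring. }
  apply is_derive_C.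
  - auto_derive; auto. field. lra.
  - auto_derive; auto. field. lra.
Qed.

Lemma cpowR_cont (t : R) (w : C) : (0 < t)%R -> continuous (fun u => cpowR u w) t.
Proof.
  intros. apply (ex_derive_continuous (V:=C_R_NormedModule)). eexists. apply cpowR_deriv; auto.
Qed.

Definition cp (t : R) (z : C) : C := if Rlt_dec 0 t then cpowR t z else 0.

Lemma cp_pos t z : (0 < t)%R -> cp t z = cpowR t z.
Proof. intros. unfold cp. destruct Rlt_dec; auto; lra. Qed.

Lemma cp_npos t z : (t <= 0)%R -> cp t z = 0.
Proof. intros. unfold cp. destruct Rlt_dec; auto; lra. Qed.

Lemma Cmod_cp_le t z : (0 <= t <= 1)%R -> (1 <= Re z)%R -> (Cmod (cp t z) <= t)%R.
Proof.
  intros [h0 h1] hz. destruct (Rlt_dec 0 t).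
  - rewrite cp_pos, Cmod_cpowR; auto.
    assert (ln t <= 0)%R. { rewrite <- ln_1. destruct h1. left; apply ln_increasing; auto. right; subst; auto. }
    rewrite <- (exp_ln t) at 2; auto. destruct (Req_dec (Re z * ln t) (ln t)).
    + rewrite H0; lra.
    + left. apply exp_increasing. nra.
  - rewrite cp_npos, Cmod_0; lra.
Qed.

Lemma Cmod_cp t z : (0 < t)%R -> Cmod (cp t z) = exp (Re z * ln t).
Proof. intros. rewrite cp_pos, Cmod_cpowR; auto. Qed.

Lemma Cmod_ball (c : C) (eps : R) : (Cmod c < eps)%R -> @ball C_UniformSpace (0:C) eps c.
Proof.
  intros H. destruct c as [p q]. pose proof (Rmax_Cmod (p,q)).
  split; simpl; unfold ball; simpl; unfold AbsRing_ball; simpl; unfold abs, minus, plus, opp; simpl;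
   rewrite Ropp_0, Rplus_0_r.
  - eapply Rle_lt_trans; [|apply H]. eapply Rle_trans; [|apply H0]. apply Rmax_l.
  - eapply Rle_lt_trans; [|apply H]. eapply Rle_trans; [|apply H0]. apply Rmax_r.
Qed.

Lemma cp_cont (t : R) (z : C) : (1 <= Re z)%R -> continuous (fun u => cp u z) t.
Proof.
  intros hz. destruct (Rtotal_order t 0) as [Hlt|[Heq|Hgt]].
  - apply (continuous_ext_loc (T:=R_UniformSpace) (U:=C_UniformSpace) _ (fun _ => (0:C))).
    + exists (mkposreal (-t) ltac:(lra)). intros y Hy. unfold ball in Hy; simpl in Hy.
      unfold AbsRing_ball, abs, minus, plus, opp in Hy; simpl in Hy.
      rewrite cp_npos; auto. apply Rabs_def2 in Hy. lra.
    + apply continuous_const.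
  - subst. intros P HP. unfold filtermap. rewrite cp_npos in HP by lra.
    destruct HP as [eps Heps].
    exists (mkposreal (Rmin 1 eps) ltac:(destruct eps; simpl; apply Rmin_pos; lra)).
    intros y Hy. apply Heps. unfold ball in Hy; simpl in Hy.
    unfold AbsRing_ball, abs, minus, plus, opp in Hy; simpl in Hy.
    rewrite Ropp_0, Rplus_0_r in Hy.
    destruct (Rle_dec y 0).
    + rewrite cp_npos; auto. apply ball_center.
    + apply Cmod_ball. pose proof (Rmin_l 1 eps). pose proof (Rmin_r 1 eps).
      apply Rabs_def2 in Hy.
      eapply Rle_lt_trans. apply Cmod_cp_le; auto. lra. lra.
  - apply (continuous_ext_loc (T:=R_UniformSpace) (U:=C_UniformSpace) _ (fun u => cpowR u z)).
    + exists (mkposreal t Hgt). intros y Hy. unfold ball in Hy; simpl in Hy.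
      unfold AbsRing_ball, abs, minus, plus, opp in Hy; simpl in Hy.
      apply Rabs_def2 in Hy. rewrite cp_pos; auto. lra.
    + apply cpowR_cont; auto.
Qed.

Lemma continuous_Cmult_l (c : C) (f : R -> C) (x : R) :
  continuous f x -> continuous (fun t => c * f t) x.
Proof.
  intros H. apply (continuous_scal_r (K:=C_AbsRing) (V:=C_NormedModule) c f x H).
Qed.

Lemma minus_C (a b : C) : @minus C_R_NormedModule a b = a - b.
Proof. destruct a, b; reflexivity. Qed.

Lemma plus_C (a b : C) : @plus C_R_NormedModule a b = a + b.
Proof. destruct a, b; reflexivity. Qed.

Lemma scal_C (k : R) (a : C) : @scal R_Ring C_R_ModuleSpace k a = RtoC k * a.
Proof. destruct a; unfold scal; simpl. unfold Cmult, RtoC; simpl.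
  unfold ModuleSpace.scal; simpl. unfold prod_scal; simpl. unfold scal; simpl.
  unfold mult; simpl. f_equal; ring. Qed.

Lemma is_RInt_Cmult (f : R -> C) (a b : R) (l c : C) :
  is_RInt (V:=C_R_NormedModule) f a b l ->
  is_RInt (V:=C_R_NormedModule) (fun t => c * f t) a b (c * l).
Proof.
  intros H.
  pose proof (is_RInt_fct_extend_fst (U:=R_NormedModule) (V:=R_NormedModule) f a b l H) as H1.
  pose proof (is_RInt_fct_extend_snd (U:=R_NormedModule) (V:=R_NormedModule) f a b l H) as H2.
  destruct c as [c1 c2].
  apply (is_RInt_ext (V:=C_R_NormedModule)
    (fun t => ((c1 * fst (f t) - c2 * snd (f t))%R, (c1 * snd (f t) + c2 * fst (f t))%R) : C)).
  { intros t _. unfold Cmult; simpl. f_equal; ring. }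
  replace ((c1, c2) * l) with (((c1 * fst l - c2 * snd l)%R, (c1 * snd l + c2 * fst l)%R) : C).
  2:{ unfold Cmult; simpl. f_equal; ring. }
  apply (is_RInt_fct_extend_pair (U:=R_NormedModule) (V:=R_NormedModule)); simpl.
  - apply (is_RInt_minus (V:=R_NormedModule)); apply (is_RInt_scal (V:=R_NormedModule)); auto.
  - apply (is_RInt_plus (V:=R_NormedModule)); apply (is_RInt_scal (V:=R_NormedModule)); auto.
Qed.

Lemma is_RInt_Cminus (f g : R -> C) (a b : R) (l1 l2 : C) :
  is_RInt (V:=C_R_NormedModule) f a b l1 ->
  is_RInt (V:=C_R_NormedModule) g a b l2 ->
  is_RInt (V:=C_R_NormedModule) (fun t => f t - g t) a b (l1 - l2).
Proof.
  intros. rewrite <- minus_C.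
  apply (is_RInt_ext (V:=C_R_NormedModule) (fun t => @minus C_R_NormedModule (f t) (g t))).
  { intros; apply minus_C. }
  apply (is_RInt_minus (V:=C_R_NormedModule)); auto.
Qed.

Lemma is_RInt_Cplus (f g : R -> C) (a b : R) (l1 l2 : C) :
  is_RInt (V:=C_R_NormedModule) f a b l1 ->
  is_RInt (V:=C_R_NormedModule) g a b l2 ->
  is_RInt (V:=C_R_NormedModule) (fun t => f t + g t) a b (l1 + l2).
Proof.
  intros. rewrite <- plus_C.
  apply (is_RInt_ext (V:=C_R_NormedModule) (fun t => @plus C_R_NormedModule (f t) (g t))).
  { intros; apply plus_C. }
  apply (is_RInt_plus (V:=C_R_NormedModule)); auto.
Qed.

Lemma Cinv_cancel (w z : C) : w <> 0 -> / w * (w * z) = z.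
Proof. intros; field; auto. Qed.

Lemma int_cpow_ab (w : C) (a b : R) : w <> 0 -> (0 < a)%R -> (a <= b)%R ->
  is_RInt (V:=C_R_NormedModule) (fun t => cpowR t (w - 1)) a b ((cpowR b w - cpowR a w) / w).
Proof.
  intros hw ha hab.
  assert (H : is_RInt (V:=C_R_NormedModule) (fun t => w * cpowR t (w - 1)) a b (cpowR b w - cpowR a w)).
  { rewrite <- minus_C.
    apply (is_RInt_derive (V:=C_R_CompleteNormedModule) (fun u => cpowR u w)).
    - intros x Hx. rewrite Rmin_left, Rmax_right in Hx; auto. apply cpowR_deriv. lra.
    - intros x Hx. rewrite Rmin_left, Rmax_right in Hx; auto. apply continuous_Cmult_l.
      apply cpowR_cont; lra. }
  apply (is_RInt_Cmult _ _ _ _ (/ w)) in H.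
  apply (is_RInt_ext (V:=C_R_NormedModule)) with (fun t => / w * (w * cpowR t (w - 1))).
  { intros x _. apply Cinv_cancel; auto. }
  replace ((cpowR b w - cpowR a w) / w) with (/ w * (cpowR b w - cpowR a w)) by (field; auto).
  auto.
Qed.

Lemma norm_C (z : C) : @norm R_AbsRing C_R_NormedModule z = Cmod z.
Proof.
  destruct z as [p q]. unfold norm; simpl. unfold prod_norm, Cmod; simpl.
  unfold norm; simpl. unfold abs; simpl. f_equal. rewrite !Rmult_1_r. pose proof (Rsqr_abs p); pose proof (Rsqr_abs q); unfold Rsqr in *; lra.
Qed.

Lemma Cmod_le_eps_0 (z : C) : (forall eps, (0 < eps)%R -> (Cmod z <= eps)%R) -> z = 0.
Proof.
  intros H. destruct (Req_dec (Cmod z) 0).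
  - apply Cmod_eq_0; auto.
  - pose proof (Cmod_ge_0 z). specialize (H (Cmod z / 2)%R ltac:(lra)). lra.
Qed.

Lemma is_RInt_unique_C (f : R -> C) a b l1 l2 :
  is_RInt (V:=C_R_NormedModule) f a b l1 -> is_RInt (V:=C_R_NormedModule) f a b l2 -> l1 = l2.
Proof.
  intros H1 H2. apply (is_RInt_unique (V:=C_R_CompleteNormedModule)) in H1.
  apply (is_RInt_unique (V:=C_R_CompleteNormedModule)) in H2. congruence.
Qed.

Lemma cp_ex_RInt (z : C) (a b : R) : (1 <= Re z)%R ->
  ex_RInt (V:=C_R_CompleteNormedModule) (fun t => cp t z) a b.
Proof.
  intros hz. apply (ex_RInt_continuous (V:=C_R_CompleteNormedModule)). intros; apply cp_cont; auto.
Qed.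

Lemma Re_minus1 (w : C) : Re (w - 1) = (Re w - 1)%R.
Proof. destruct w; simpl; ring. Qed.

Lemma Cmod_ge_Re (w : C) : (Re w <= Cmod w)%R.
Proof. pose proof (re_le_Cmod w). pose proof (Rle_abs (Re w)). lra. Qed.

Lemma pow_le_self (a x : R) : (0 < a <= 1)%R -> (1 <= x)%R -> (exp (x * ln a) <= a)%R.
Proof.
  intros [h0 h1] hx.
  assert (ln a <= 0)%R. { rewrite <- ln_1. destruct h1. left; apply ln_increasing; auto. right; subst; auto. }
  rewrite <- (exp_ln a) at 2; auto. destruct (Req_dec (x * ln a) (ln a)).
  + rewrite H0; lra.
  + left. apply exp_increasing. nra.
Qed.

Lemma int_base (w : C) (b : R) : (2 <= Re w)%R -> (0 < b)%R ->
  is_RInt (V:=C_R_NormedModule) (fun t => cp t (w - 1)) 0 b (cpowR b w / w).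
Proof.
  intros hw hb.
  assert (hw1 : (1 <= Re (w - 1))%R) by (rewrite Re_minus1; lra).
  assert (hw0 : w <> 0). { intro E. rewrite E in hw. simpl in hw. lra. }
  destruct (cp_ex_RInt (w-1) 0 b hw1) as [I HI].
  replace (cpowR b w / w) with I; auto.
  apply Ceq_minus, Cmod_le_eps_0. intros eps heps.
  set (a := (Rmin (Rmin 1 b) eps / 2)%R).
  assert (ha : (0 < a)%R). { unfold a. assert (0 < Rmin (Rmin 1 b) eps)%R by (apply Rmin_pos; [apply Rmin_pos|]; lra). lra. }
  assert (ha1 : (a <= 1 /\ a <= b /\ a <= eps / 2)%R).
  { unfold a. pose proof (Rmin_l (Rmin 1 b) eps). pose proof (Rmin_r (Rmin 1 b) eps).
    pose proof (Rmin_l 1 b). pose proof (Rmin_r 1 b). lra. }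
  destruct (cp_ex_RInt (w-1) 0 a hw1) as [J HJ].
  assert (Hab : is_RInt (V:=C_R_NormedModule) (fun t => cp t (w - 1)) a b ((cpowR b w - cpowR a w) / w)).
  { apply (is_RInt_ext (V:=C_R_NormedModule) (fun t => cpowR t (w - 1))).
    - intros t Ht. rewrite Rmin_left, Rmax_right in Ht by lra. rewrite cp_pos; auto. lra.
    - apply int_cpow_ab; auto; lra. }
  pose proof (is_RInt_Chasles (V:=C_R_NormedModule) _ _ _ _ _ _ HJ Hab) as HC.
  rewrite plus_C in HC.
  pose proof (is_RInt_unique_C _ _ _ _ _ HI HC) as E. rewrite E.
  replace (J + (cpowR b w - cpowR a w) / w - cpowR b w / w) with (J - cpowR a w / w) by (field; auto).
  assert (HJn : (Cmod J <= a * a)%R).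
  { rewrite <- norm_C. replace (a * a)%R with ((a - 0) * a)%R by ring.
    apply (norm_RInt_le_const (V:=C_R_NormedModule) (fun t => cp t (w - 1)) 0 a); auto; try lra.
    intros t Ht. rewrite norm_C. eapply Rle_trans. apply Cmod_cp_le; auto; lra. lra. }
  assert (Hpn : (Cmod (cpowR a w / w) <= a)%R).
  { rewrite Cmod_div; auto. rewrite Cmod_cpowR. pose proof (Cmod_ge_Re w).
    pose proof (pow_le_self a (Re w) ltac:(lra) ltac:(lra)).
    apply Rle_trans with (exp (Re w * ln a) / 1)%R.
    - unfold Rdiv. apply Rmult_le_compat_l. left; apply exp_pos.
      apply Rinv_le_contravar; lra.
    - lra. }
  unfold Cminus. eapply Rle_trans. apply Cmod_triangle. rewrite Cmod_opp. nra.
Qed.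

Fixpoint cprod (w : C) (m : nat) : C :=
  match m with 0 => w | S m' => cprod w m' * (w + INR (S m')) end.

Lemma cprod_shift (w : C) (m : nat) : cprod w (S m) = w * cprod (w + 1) m.
Proof.
  induction m.
  - simpl. ring.
  - change (cprod w (S (S m))) with (cprod w (S m) * (w + INR (S (S m)))).
    rewrite IHm. change (cprod (w+1) (S m)) with (cprod (w+1) m * (w + 1 + INR (S m))). rewrite (S_INR (S m)). rewrite RtoC_plus. ring.
Qed.

Lemma Re_INR_add (w : C) (n : nat) : Re (w + INR n) = (Re w + INR n)%R.
Proof. destruct w; simpl; ring. Qed.

Lemma cprod_nz (w : C) (m : nat) : (0 < Re w)%R -> cprod w m <> 0.
Proof.
  intros hw. induction m.
  - simpl. intro E; rewrite E in hw; simpl in hw; lra.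
  - change (cprod w (S m)) with (cprod w m * (w + INR (S m))). apply Cmult_neq_0; auto. intro E.
    assert (Re (w + INR (S m)) = 0%R) by (rewrite E; reflexivity).
    rewrite Re_INR_add in H. pose proof (pos_INR (S m)). lra.
Qed.

Lemma Re_plus1 (w : C) : Re (w + 1) = (Re w + 1)%R.
Proof. destruct w; simpl; ring. Qed.

Lemma cp_succ (t : R) (w : C) : cp t (w + 1 - 1) = RtoC t * cp t (w - 1).
Proof.
  destruct (Rlt_dec 0 t).
  - rewrite !cp_pos; auto. replace (w + 1 - 1) with ((w - 1) + 1) by ring. apply cpowR_S; auto.
  - rewrite !cp_npos by lra. ring.
Qed.

Lemma int_beta (m : nat) : forall (w : C) (b : R), (2 <= Re w)%R -> (0 < b)%R ->
  is_RInt (V:=C_R_NormedModule) (fun t => cp t (w - 1) * RtoC ((1 - t / b) ^ m))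
    0 b (cpowR b w * INR (fact m) / cprod w m).
Proof.
  induction m; intros w b hw hb.
  - apply (is_RInt_ext (V:=C_R_NormedModule) (fun t => cp t (w - 1))).
    { intros; simpl. ring. }
    simpl. replace (cpowR b w * 1 / w) with (cpowR b w / w) by (unfold Cdiv; ring).
    apply int_base; auto.
  - assert (hw0 : (0 < Re w)%R) by lra.
    pose proof (IHm w b hw hb) as H1.
    pose proof (IHm (w + 1) b ltac:(rewrite Re_plus1; lra) hb) as H2.
    apply (is_RInt_Cmult _ _ _ _ (RtoC (/ b))) in H2.
    pose proof (is_RInt_Cminus _ _ _ _ _ _ H1 H2) as H3.
    assert (Ev : cpowR b w * INR (fact (S m)) / cprod w (S m) =
       cpowR b w * INR (fact m) / cprod w m -
       RtoC (/ b) * (cpowR b (w + 1) * INR (fact m) / cprod (w + 1) m)).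
    { assert (E1 : cprod w (S m) = w * cprod (w + 1) m) by apply cprod_shift.
      assert (E2 : cprod w (S m) = cprod w m * (w + INR (S m))) by reflexivity.
      assert (Hn1 : w + INR (S m) <> 0).
      { intro E. assert (Re (w + INR (S m)) = 0%R) by (rewrite E; reflexivity).
        rewrite Re_INR_add in H. pose proof (pos_INR (S m)). lra. }
      assert (Hp : cprod (w + 1) m <> 0) by (apply cprod_nz; rewrite Re_plus1; lra).
      assert (Hw : w <> 0) by (intro E; rewrite E in hw0; simpl in hw0; lra).
      assert (E3 : cprod w m = w * cprod (w + 1) m / (w + INR (S m))).
      { rewrite <- E1, E2. field; auto. }
      rewrite E1, E3. rewrite cpowR_S; auto.
      rewrite fact_simpl, mult_INR, RtoC_mult.
      assert (hb0 : RtoC b <> 0) by (intro E; apply RtoC_inj in E; lra).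
      rewrite RtoC_inv by lra. 
      field. repeat split; auto. }
    rewrite Ev.
    apply (is_RInt_ext (V:=C_R_NormedModule)) with (2 := H3).
    intros t _. rewrite cp_succ. simpl pow.
    destruct (cp t (w - 1)) as [p q]. unfold RtoC, Cmult, Cminus, Cplus, Copp; simpl.
    f_equal; field; lra.
Qed.

Definition Gn (n : nat) (w : C) : C := cpowR (INR n) w * INR (fact n) / cprod w n.

Section RealPart4.
Local Open Scope R_scope.

Lemma exp_pow_nat (a : R) (k : nat) : exp a ^ k = exp (INR k * a).
Proof.
  induction k.
  - simpl. rewrite Rmult_0_l, exp_0; auto.
  - rewrite S_INR. simpl. rewrite IHk. rewrite <- exp_plus. f_equal. ring.
Qed.

Lemma exp_ge_powk (u : R) (k : nat) : 0 <= u -> (1 <= k)%nat -> (u / INR k) ^ k <= exp u.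
Proof.
  intros hu hk. assert (hk' : 0 < INR k) by (apply lt_0_INR; lia).
  replace u with (INR k * (u / INR k)) at 2 by (field; lra).
  rewrite <- exp_pow_nat. apply pow_incr. split.
  - apply Rmult_le_pos; auto. left; apply Rinv_0_lt_compat; auto.
  - pose proof (exp_ineq1_le (u / INR k)). lra.
Qed.

Lemma exists_nat_ge (r : R) : exists k : nat, (1 <= k)%nat /\ r <= INR k.
Proof.
  destruct (INR_archimed 1 r ltac:(lra)) as [n Hn].
  exists (S n). split; [lia|]. rewrite S_INR. lra.
Qed.

Lemma poly_exp_bound (r : R) : 0 <= r ->
  exists K, 0 < K /\ forall t, 0 < t -> exp (r * ln t) <= K * exp (t / 2).
Proof.
  intros hr. destruct (exists_nat_ge r) as [k [hk hrk]].
  exists (1 + (2 * INR k) ^ k). split.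
  { pose proof (pow_le (2 * INR k) k ltac:(pose proof (pos_INR k); lra)). lra. }
  intros t ht. assert (hk' : 0 < INR k) by (apply lt_0_INR; lia).
  pose proof (exp_pos (t/2)) as He.
  pose proof (exp_ineq1_le (t/2)).
  destruct (Rle_lt_dec t 1).
  - assert (ln t <= 0). { rewrite <- ln_1. destruct r0. left; apply ln_increasing; auto. right; subst; auto. }
    assert (exp (r * ln t) <= 1).
    { rewrite <- exp_0. destruct (Req_dec (r * ln t) 0). rewrite H1; lra. left; apply exp_increasing. nra. }
    pose proof (pow_le (2 * INR k) k ltac:(lra)). nra.
  - assert (0 < ln t) by (rewrite <- ln_1; apply ln_increasing; lra).
    assert (exp (r * ln t) <= t ^ k).
    { rewrite <- (exp_ln (t ^ k)) by (apply pow_lt; lra). rewrite ln_pow by lra.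
      destruct (Req_dec (r * ln t) (INR k * ln t)). rewrite H1; lra.
      left; apply exp_increasing. nra. }
    assert (t ^ k = (2 * INR k) ^ k * ((t / 2) / INR k) ^ k).
    { rewrite <- Rpow_mult_distr. f_equal. field. lra. }
    pose proof (exp_ge_powk (t/2) k ltac:(lra) hk).
    pose proof (pow_le (2 * INR k) k ltac:(lra)).
    nra.
Qed.

Lemma bernoulli_neg (h : R) (n : nat) : 0 <= h <= 1 -> 1 - INR n * h <= (1 - h) ^ n.
Proof.
  intros hh. induction n.
  - simpl. lra.
  - rewrite S_INR. simpl. assert (0 <= (1 - h) ^ n) by (apply pow_le; lra).
    pose proof (pos_INR n). assert (0 <= (1 - h) * ((1 - h) ^ n - (1 - INR n * h))) by (apply Rmult_le_pos; lra).
    assert (0 <= INR n * h * h) by (apply Rmult_le_pos; [apply Rmult_le_pos|]; lra). nra.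
Qed.

Lemma exp_approx (t : R) (n : nat) : (1 <= n)%nat -> 0 <= t <= INR n ->
  0 <= exp (- t) - (1 - t / INR n) ^ n <= t ^ 2 * exp (- t) / INR n.
Proof.
  intros hn ht. assert (hn' : 0 < INR n) by (apply lt_0_INR; lia).
  assert (h0 : 0 <= t / INR n <= 1).
  { split. apply Rmult_le_pos; [lra| left; apply Rinv_0_lt_compat; lra].
    apply (Rmult_le_reg_r (INR n)); auto. field_simplify; lra. }
  assert (E : exp (- t) = exp (- (t / INR n)) ^ n).
  { rewrite exp_pow_nat. f_equal. field. lra. }
  split.
  - rewrite E. assert (0 <= 1 - t / INR n <= exp (- (t / INR n))).
    { pose proof (exp_ineq1_le (- (t / INR n))). lra. }
    pose proof (pow_incr _ _ n H). lra.
  - (* e^t (1 - t/n)^n >= (1 - t^2/n^2)^n >= 1 - t^2/n *)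
    assert (E2 : exp t = exp (t / INR n) ^ n) by (rewrite exp_pow_nat; f_equal; field; lra).
    assert (H1 : (1 + t / INR n) ^ n <= exp t).
    { rewrite E2. apply pow_incr. pose proof (exp_ineq1_le (t / INR n)). lra. }
    assert (H2 : (1 + t / INR n) ^ n * (1 - t / INR n) ^ n = (1 - (t / INR n)^2) ^ n).
    { rewrite <- Rpow_mult_distr. f_equal. ring. }
    assert (H3 : 1 - INR n * (t / INR n) ^ 2 <= (1 - (t / INR n) ^ 2) ^ n).
    { apply bernoulli_neg. split. apply pow2_ge_0. nra. }
    assert (H4 : INR n * (t / INR n) ^ 2 = t ^ 2 / INR n) by (field; lra).
    assert (H5 : 0 <= (1 - t / INR n) ^ n) by (apply pow_le; lra).
    assert (H6 : 0 <= (1 + t / INR n) ^ n) by (apply pow_le; lra).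
    assert (Hx : exp t * exp (- t) = 1) by (rewrite <- exp_plus, Rplus_opp_r, exp_0; auto).
    pose proof (exp_pos (- t)).
    assert (exp t * (1 - t / INR n) ^ n >= 1 - t ^ 2 / INR n).
    { rewrite <- H4. eapply Rge_trans with ((1 + t / INR n) ^ n * (1 - t / INR n) ^ n).
      - apply Rle_ge. apply Rmult_le_compat_r; auto.
      - rewrite H2. lra. }
    assert ((1 - t / INR n) ^ n >= exp (- t) * (1 - t ^ 2 / INR n)).
    { replace ((1 - t / INR n) ^ n) with (exp (- t) * (exp t * (1 - t / INR n) ^ n)).
      2:{ rewrite <- Rmult_assoc, (Rmult_comm (exp (-t))), Hx. ring. }
      apply Rle_ge, Rmult_le_compat_l; lra. }
    unfold Rdiv in *. nra.
Qed.

End RealPart4.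

Definition ft (w : C) (t : R) : C := cp t (w - 1) * RtoC (exp (- t)).

Lemma RtoC_mult_scal (r : R) (z : C) : z * RtoC r = @scal R_Ring C_R_ModuleSpace r z.
Proof. rewrite scal_C. ring. Qed.

Lemma cont_cp_real (z : C) (g : R -> R) (x : R) : (1 <= Re z)%R -> continuous g x ->
  continuous (fun t => cp t z * RtoC (g t)) x.
Proof.
  intros hz hg.
  apply (continuous_ext (T:=R_UniformSpace) (U:=C_UniformSpace)
          (fun t => @scal R_Ring C_R_ModuleSpace (g t) (cp t z))).
  { intros; rewrite RtoC_mult_scal; auto. }
  apply (continuous_scal (K:=R_AbsRing) (V:=C_R_NormedModule)); auto.
  apply cp_cont; auto.
Qed.

Lemma ft_ex_RInt (w : C) (a b : R) : (2 <= Re w)%R ->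
  ex_RInt (V:=C_R_CompleteNormedModule) (ft w) a b.
Proof.
  intros hw. apply (ex_RInt_continuous (V:=C_R_CompleteNormedModule)). intros z _.
  unfold ft. apply cont_cp_real. rewrite Re_minus1; lra.
  apply (ex_derive_continuous (fun t => exp (- t))). auto_derive; auto.
Qed.

Definition Jw (w : C) (c : R) : C := RInt (V:=C_R_CompleteNormedModule) (ft w) 0 c.

Lemma Jw_correct (w : C) (c : R) : (2 <= Re w)%R ->
  is_RInt (V:=C_R_NormedModule) (ft w) 0 c (Jw w c).
Proof. intros. apply (RInt_correct (V:=C_R_CompleteNormedModule)). apply ft_ex_RInt; auto. Qed.

Lemma is_RInt_exp_half (K u v : R) :
  is_RInt (fun t => K * exp (- t / 2))%R u v (2 * K * (exp (- u / 2) - exp (- v / 2)))%R.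
Proof.
  replace (2 * K * (exp (- u / 2) - exp (- v / 2)))%R with
    (minus ((- 2 * K) * exp (- v / 2))%R ((- 2 * K) * exp (- u / 2))%R).
  2:{ unfold minus, plus, opp; simpl. ring. }
  apply (is_RInt_derive (fun t => (- 2 * K) * exp (- t / 2))%R).
  - intros; auto_derive; auto. replace (- x * / 2)%R with (- x / 2)%R by reflexivity. field.
  - intros. apply (ex_derive_continuous (fun t => K * exp (- t / 2))%R). auto_derive; auto.
Qed.

Lemma Cmod_cp_real (z : C) (t r : R) : Cmod (cp t z * RtoC r) = (Cmod (cp t z) * Rabs r)%R.
Proof. rewrite Cmod_mult, Cmod_R; auto. Qed.

Lemma ft_bound (w : C) : (2 <= Re w)%R ->
  exists K, (0 < K)%R /\ forall t, (0 <= t)%R -> (Cmod (ft w t) <= K * exp (- t / 2))%R.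
Proof.
  intros hw. destruct (poly_exp_bound (Re w - 1) ltac:(lra)) as [K [hK HK]].
  exists K. split; auto. intros t ht. unfold ft. rewrite Cmod_cp_real, Rabs_right by (left; apply exp_pos).
  destruct ht as [ht|ht].
  - rewrite Cmod_cp, Re_minus1 by auto. specialize (HK t ht).
    assert (E : exp (- t) = (exp (-t/2) * exp (-t/2))%R) by (rewrite <- exp_plus; f_equal; lra).
    rewrite E.
    assert (E2 : (exp (t/2) * exp (-t/2) = 1)%R) by (rewrite <- exp_plus; replace (t/2 + -t/2)%R with 0%R by lra; apply exp_0).
    pose proof (exp_pos (-t/2)). pose proof (exp_pos (t/2)).
    pose proof (Rmult_le_compat_r (exp (-t/2) * exp (-t/2)) _ _ ltac:(nra) HK).
    replace (K * exp (t / 2) * (exp (- t / 2) * exp (- t / 2)))%R with (K * exp (-t/2) * (exp (t / 2) * exp (- t / 2)))%R in H1 by ring.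
    rewrite E2 in H1. lra.
  - subst. rewrite cp_npos, Cmod_0 by lra. pose proof (exp_pos (-0/2)). pose proof (exp_pos (-0)). nra.
Qed.

Lemma opp_C (a : C) : @opp C_R_NormedModule a = - a.
Proof. destruct a; reflexivity. Qed.

Lemma int_between (w : C) (u v : R) : (2 <= Re w)%R ->
  is_RInt (V:=C_R_NormedModule) (ft w) u v (Jw w v - Jw w u).
Proof.
  intros hw. pose proof (Jw_correct w u hw) as Hu. pose proof (Jw_correct w v hw) as Hv.
  apply (is_RInt_swap (V:=C_R_NormedModule)) in Hu.
  pose proof (is_RInt_Chasles (V:=C_R_NormedModule) _ _ _ _ _ _ Hu Hv) as H.
  replace (Jw w v - Jw w u) with (@plus C_R_NormedModule (@opp C_R_NormedModule (Jw w u)) (Jw w v)); auto.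
  rewrite plus_C, opp_C. match goal with |- ?a = ?b => change (@eq C a b) end. ring.
Qed.

Lemma Jw_diff (w : C) : (2 <= Re w)%R ->
  exists K, (0 < K)%R /\ forall u v, (0 <= u <= v)%R -> (Cmod (Jw w v - Jw w u) <= 2 * K * exp (- u / 2))%R.
Proof.
  intros hw. destruct (ft_bound w hw) as [K [hK HK]]. exists K; split; auto.
  intros u v huv. rewrite <- norm_C.
  eapply Rle_trans.
  - apply (norm_RInt_le (V:=C_R_NormedModule) (ft w) (fun t => K * exp (- t / 2))%R u v).
    + lra.
    + intros t Ht. rewrite norm_C. apply HK. lra.
    + apply int_between; auto.
    + apply is_RInt_exp_half.
  - pose proof (exp_pos (- v / 2)). nra.
Qed.

Lemma Jw_Gn (w : C) : (2 <= Re w)%R ->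
  exists K, (0 < K)%R /\ forall n : nat, (1 <= n)%nat -> (Cmod (Jw w (INR n) - Gn n w) <= 2 * K / INR n)%R.
Proof.
  intros hw. destruct (poly_exp_bound (Re w + 1) ltac:(lra)) as [K [hK HK]].
  exists K; split; auto. intros n hn.
  assert (hn' : (0 < INR n)%R) by (apply lt_0_INR; lia).
  assert (HI : is_RInt (V:=C_R_NormedModule)
     (fun t => cp t (w - 1) * RtoC (exp (- t) - (1 - t / INR n) ^ n)) 0 (INR n) (Jw w (INR n) - Gn n w)).
  { apply (is_RInt_ext (V:=C_R_NormedModule)) with (2 := is_RInt_Cminus _ _ _ _ _ _ (Jw_correct w (INR n) hw) (int_beta n w (INR n) hw hn')).
    intros t _. unfold ft. rewrite RtoC_minus. match goal with |- ?a = ?b => change (@eq C a b) end. ring. }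
  rewrite <- norm_C. eapply Rle_trans.
  - apply (norm_RInt_le (V:=C_R_NormedModule) (fun t => cp t (w - 1) * RtoC (exp (- t) - (1 - t / INR n) ^ n)) (fun t => (K / INR n) * exp (- t / 2))%R 0 (INR n)).
    + lra.
    + intros t Ht. rewrite norm_C, Cmod_cp_real.
      pose proof (exp_approx t n hn Ht) as [E1 E2].
      rewrite Rabs_right by lra.
      destruct (proj1 Ht) as [ht|ht].
      * rewrite Cmod_cp by auto. rewrite Re_minus1.
        specialize (HK t ht).
        assert (Et2 : (t ^ 2 = exp (2 * ln t))%R).
        { rewrite <- (exp_ln (t^2)) by (apply pow_lt; lra). rewrite ln_pow by lra. simpl INR. f_equal; ring. }
        assert (Ex : (exp ((Re w - 1) * ln t) * t ^ 2 = exp ((Re w + 1) * ln t))%R).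
        { rewrite Et2, <- exp_plus. f_equal. ring. }
        assert (E : exp (- t) = (exp (-t/2) * exp (-t/2))%R) by (rewrite <- exp_plus; f_equal; lra).
        assert (E3 : (exp (t/2) * exp (-t/2) = 1)%R) by (rewrite <- exp_plus; replace (t/2 + -t/2)%R with 0%R by lra; apply exp_0).
        pose proof (exp_pos (-t/2)). pose proof (exp_pos (t/2)).
        pose proof (exp_pos ((Re w - 1) * ln t)).
        apply Rle_trans with (exp ((Re w - 1) * ln t) * (t ^ 2 * exp (- t) / INR n))%R.
        { apply Rmult_le_compat_l; lra. }
        replace (exp ((Re w - 1) * ln t) * (t ^ 2 * exp (- t) / INR n))%R
          with (exp ((Re w + 1) * ln t) * exp (-t/2) * exp (-t/2) / INR n)%R.
        2:{ rewrite <- Ex, E. field. lra. }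
        replace (K / INR n * exp (- t / 2))%R with (K * (exp (t/2) * exp (-t/2)) * exp (-t/2) / INR n)%R.
        2:{ rewrite E3. field. lra. }
        unfold Rdiv. apply Rmult_le_compat_r. left; apply Rinv_0_lt_compat; auto.
        apply Rmult_le_compat_r. lra. rewrite <- Rmult_assoc. apply Rmult_le_compat_r; lra.
      * subst t. rewrite cp_npos, Cmod_0 by lra. pose proof (exp_pos (-0/2)).
        assert (0 <= K / INR n)%R by (apply Rle_div_r; lra). nra.
    + exact HI.
    + apply is_RInt_exp_half.
  - pose proof (exp_pos (- INR n / 2)). replace (- 0 / 2)%R with 0%R by field. rewrite exp_0.
    assert (0 <= K / INR n)%R by (unfold Rdiv; apply Rmult_le_pos; [lra| left; apply Rinv_0_lt_compat; lra]).
    replace (2 * K / INR n)%R with (2 * (K / INR n) * 1)%R by (field; lra). nra.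
Qed.

Lemma ball_C_of (x y : C) (e : R) : (Cmod (y - x) < e)%R -> @ball C_UniformSpace x e y.
Proof.
  intros H. destruct x as [x1 x2], y as [y1 y2]. pose proof (Rmax_Cmod ((y1,y2) - (x1,x2))) as Hm.
  simpl in Hm.
  split; simpl; unfold ball; simpl; unfold AbsRing_ball; simpl; unfold abs, minus, plus, opp; simpl.
  - eapply Rle_lt_trans; [|apply H]. eapply Rle_trans; [|apply Hm]. apply Rmax_l.
  - eapply Rle_lt_trans; [|apply H]. eapply Rle_trans; [|apply Hm]. apply Rmax_r.
Qed.

Lemma ball_C_to (x y : C) (e : R) : @ball C_UniformSpace x e y -> (Cmod (y - x) < 2 * e)%R.
Proof.
  destruct x as [x1 x2], y as [y1 y2]. intros [H1 H2].
  unfold ball in H1, H2; simpl in H1, H2; unfold AbsRing_ball, abs, minus, plus, opp in H1, H2; simpl in H1, H2.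
  pose proof (Cmod_2Rmax ((y1, y2) - (x1, x2))) as Hc. simpl in Hc.
  assert (Hs : (sqrt 2 < 2)%R).
  { rewrite <- (sqrt_pow2 2) at 2 by lra. apply sqrt_lt_1; lra. }
  assert (Rmax (Rabs (y1 + - x1)) (Rabs (y2 + - x2)) < e)%R by (apply Rmax_lub_lt; auto).
  pose proof (Rmax_l (Rabs (y1 + - x1)) (Rabs (y2 + - x2))). pose proof (Rabs_pos (y1 + - x1)).
  assert (0 < sqrt 2)%R by (apply sqrt_lt_R0; lra).
  eapply Rle_lt_trans. apply Hc. nra.
Qed.

Lemma exp_small (c eps : R) : (0 < c)%R -> (0 < eps)%R ->
  exists M, (0 <= M)%R /\ forall u, (M <= u)%R -> (c * exp (- u / 2) < eps)%R.
Proof.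
  intros hc he. exists (Rmax 0 (2 * ln (2 * c / eps)))%R. split. apply Rmax_l.
  intros u hu. pose proof (Rmax_r 0 (2 * ln (2 * c / eps))).
  assert (exp (- u / 2) <= exp (- ln (2 * c / eps)))%R.
  { destruct (Req_dec (- u / 2) (- ln (2 * c / eps))) as [E|E]. rewrite E; lra.
    left; apply exp_increasing; lra. }
  rewrite exp_Ropp, exp_ln in H0. 2:{ apply Rdiv_lt_0_compat; lra. }
  replace (/ (2 * c / eps))%R with (eps / (2 * c))%R in H0 by (field; lra).
  apply Rle_lt_trans with (c * (eps / (2 * c)))%R.
  apply Rmult_le_compat_l; lra. replace (c * (eps / (2 * c)))%R with (eps / 2)%R by (field; lra). lra.
Qed.

Lemma Jw_limit (w : C) : (2 <= Re w)%R ->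
  exists L : C, filterlim (Jw w) (Rbar_locally p_infty) (locally L).
Proof.
  intros hw. destruct (Jw_diff w hw) as [K [hK HK]].
  apply (filterlim_locally_cauchy (U:=C_R_CompleteNormedModule) (F:=Rbar_locally p_infty)).
  intros eps. destruct (exp_small (2 * K) eps ltac:(lra) (cond_pos eps)) as [M [hM HM]].
  exists (fun u => M < u)%R. split.
  - exists M. auto.
  - intros u v hu hv. apply ball_C_of.
    destruct (Rle_dec u v).
    + eapply Rle_lt_trans. apply HK. lra. apply HM. lra.
    + rewrite <- Cmod_opp. replace (- (Jw w v - Jw w u)) with (Jw w u - Jw w v) by ring.
      eapply Rle_lt_trans. apply HK. lra. apply HM. lra.
Qed.

Lemma Jw_small (w : C) (a : R) : (2 <= Re w)%R -> (0 <= a <= 1)%R -> (Cmod (Jw w a) <= a)%R.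
Proof.
  intros hw ha. rewrite <- norm_C.
  apply Rle_trans with ((a - 0) * a)%R; [|nra].
  apply (norm_RInt_le_const (V:=C_R_NormedModule) (ft w) 0 a); auto; try lra.
  2: apply Jw_correct; auto.
  intros t Ht. rewrite norm_C. unfold ft. rewrite Cmod_cp_real, Rabs_right by (left; apply exp_pos).
  pose proof (Cmod_cp_le t (w - 1) ltac:(lra) ltac:(rewrite Re_minus1; lra)).
  assert (exp (- t) <= 1)%R by (rewrite <- exp_0; destruct (Req_dec t 0); [subst; rewrite Ropp_0; lra| left; apply exp_increasing; lra]).
  pose proof (Cmod_ge_0 (cp t (w - 1))). nra.
Qed.

Lemma Gamma_is (w L : C) : (2 <= Re w)%R ->
  filterlim (Jw w) (Rbar_locally p_infty) (locally L) -> Gamma w = L.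
Proof.
  intros hw HL. unfold Gamma.
  apply (is_RInt_gen_unique (V:=C_R_CompleteNormedModule) (Fa:=at_right 0) (Fb:=Rbar_locally p_infty)).
  unfold is_RInt_gen, filterlimi, filter_le, filtermapi. intros P [eps HP].
  assert (he4 : (0 < eps / 4)%R) by (destruct eps; simpl; lra).
  specialize (HL (ball L (eps/4)) (locally_ball L (mkposreal _ he4))).
  destruct HL as [M HM].
  assert (hd : (0 < Rmin 1 (eps/2))%R) by (apply Rmin_pos; destruct eps; simpl; lra).
  apply Filter_prod with (fun a => 0 < a < Rmin 1 (eps/2))%R (fun b => Rmax M 1 < b)%R.
  - exists (mkposreal _ hd). intros y Hy hy. simpl in *.
    unfold ball in Hy; simpl in Hy; unfold AbsRing_ball, abs, minus, plus, opp in Hy; simpl in Hy.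
    rewrite Ropp_0, Rplus_0_r in Hy. apply Rabs_def2 in Hy. lra.
  - exists (Rmax M 1). auto.
  - intros a b [ha1 ha2] hb. simpl.
    pose proof (Rmin_l 1 (eps/2)). pose proof (Rmin_r 1 (eps/2)).
    pose proof (Rmax_l M 1). pose proof (Rmax_r M 1).
    exists (Jw w b - Jw w a). split.
    + apply (is_RInt_ext (V:=C_R_NormedModule) (ft w)).
      * intros t Ht. rewrite Rmin_left, Rmax_right in Ht by lra. unfold ft. rewrite cp_pos; auto. lra.
      * apply int_between; auto.
    + apply HP. apply ball_C_of.
      specialize (HM b ltac:(lra)). apply ball_C_to in HM.
      pose proof (Jw_small w a hw ltac:(lra)).
      replace (Jw w b - Jw w a - L) with ((Jw w b - L) + - Jw w a) by ring.
      eapply Rle_lt_trans. apply Cmod_triangle. rewrite Cmod_opp. simpl in HM. lra.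
Qed.

Definition CV (u : nat -> C) (l : C) : Prop :=
  forall eps, (0 < eps)%R -> exists N, forall n, (N <= n)%nat -> (Cmod (u n - l) < eps)%R.

Lemma Gauss (w : C) : (2 <= Re w)%R -> CV (fun n => Gn n w) (Gamma w).
Proof.
  intros hw. destruct (Jw_limit w hw) as [L HL].
  rewrite (Gamma_is w L hw HL).
  destruct (Jw_Gn w hw) as [K [hK HK]].
  intros eps he.
  assert (he4 : (0 < eps / 4)%R) by lra.
  specialize (HL (ball L (eps/4)) (locally_ball L (mkposreal _ he4))).
  destruct HL as [M HM].
  destruct (INR_archimed 1 M ltac:(lra)) as [N1 HN1].
  destruct (INR_archimed (eps / 2) (2 * K) ltac:(lra)) as [N2 HN2].
  exists (S (N1 + N2)). intros n hn.
  assert (hn1 : (1 <= n)%nat) by lia.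
  assert (h1 : (INR N1 <= INR n)%R) by (apply le_INR; lia).
  assert (h2 : (INR N2 <= INR n)%R) by (apply le_INR; lia).
  assert (INR n * (eps/2) > 2 * K)%R by nra.
  specialize (HM (INR n) ltac:(lra)). apply ball_C_to in HM. simpl in HM.
  specialize (HK n hn1).
  assert (hn' : (0 < INR n)%R) by (apply lt_0_INR; lia).
  assert (2 * K / INR n < eps / 2)%R.
  { apply (Rmult_lt_reg_r (INR n)); auto. unfold Rdiv. rewrite Rmult_assoc, Rinv_l by lra. lra. }
  replace (Gn n w - L) with ((Jw w (INR n) - L) + - (Jw w (INR n) - Gn n w)) by ring.
  eapply Rle_lt_trans. apply Cmod_triangle. rewrite Cmod_opp. lra.
Qed.

Lemma CV_Cmod (u : nat -> C) (l : C) : CV u l -> is_lim_seq (fun n => Cmod (u n)) (Cmod l).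
Proof.
  intros H. apply is_lim_seq_spec. intros eps.
  destruct (H eps (cond_pos eps)) as [N HN]. exists N. intros n hn.
  specialize (HN n hn).
  apply Rle_lt_trans with (Cmod (u n - l)); auto.
  apply Rabs_le. split.
  - pose proof (Cmod_triangle (l - u n) (u n)). replace (l - u n + u n) with l in H0 by ring.
    rewrite <- (Cmod_opp (l - u n)) in H0. replace (- (l - u n)) with (u n - l) in H0 by ring. lra.
  - pose proof (Cmod_triangle (u n - l) l). replace (u n - l + l) with (u n) in H0 by ring. lra.
Qed.

Lemma lim_ratio (c : R) : is_lim_seq (fun n => ((c + INR n) / INR n)%R) 1%R.
Proof.
  apply is_lim_seq_ext_loc with (fun n => (1 + c * / INR n)%R).
  { exists 1%nat. intros n hn. assert (0 < INR n)%R by (apply lt_0_INR; lia). field. lra. }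
  assert (H : is_lim_seq (fun n => (1 + c * / INR n)%R) (1 + c * 0)%R).
  { apply is_lim_seq_plus'. apply is_lim_seq_const.
    apply is_lim_seq_scal_l with (lu := Finite 0).
    replace (Finite 0) with (Rbar_inv p_infty) by reflexivity.
    apply is_lim_seq_inv. apply is_lim_seq_INR. discriminate. }
  replace (1 + c * 0)%R with 1%R in H by ring. exact H.
Qed.

Lemma Gn_succ (n : nat) (w : C) : (1 <= n)%nat -> (0 < Re w)%R ->
  Gn n (w + 1) * (w + 1 + INR n) = INR n * w * Gn n w.
Proof.
  intros hn hw. unfold Gn.
  assert (hn' : (0 < INR n)%R) by (apply lt_0_INR; lia).
  assert (E1 : cprod w (S n) = w * cprod (w + 1) n) by apply cprod_shift.
  assert (E2 : cprod w (S n) = cprod w n * (w + INR (S n))) by reflexivity.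
  assert (Hp : cprod (w + 1) n <> 0) by (apply cprod_nz; rewrite Re_plus1; lra).
  assert (Hq : cprod w n <> 0) by (apply cprod_nz; lra).
  assert (Hw : w <> 0) by (intro E; rewrite E in hw; simpl in hw; lra).
  assert (E3 : cprod (w + 1) n = cprod w n * (w + 1 + INR n) / w).
  { replace (w + 1 + INR n) with (w + INR (S n)) by (rewrite S_INR, RtoC_plus; ring).
    rewrite <- E2, E1. field; auto. }
  rewrite E3, cpowR_S by auto.
  assert (Hs : w + 1 + INR n <> 0).
  { intro E. assert (Re (w + 1 + INR n) = 0%R) by (rewrite E; reflexivity).
    rewrite Re_INR_add, Re_plus1 in H. pose proof (pos_INR n). lra. }
  field. repeat split; auto.
Qed.

Lemma Gamma_succ (w : C) : (2 <= Re w)%R -> Gamma (w + 1) = w * Gamma w.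
Proof.
  intros hw. apply Ceq_minus, Cmod_le_eps_0. intros eps he.
  pose proof (Gauss w hw) as H0. pose proof (Gauss (w + 1) ltac:(rewrite Re_plus1; lra)) as H1.
  set (A := Cmod (Gamma (w + 1))). set (W := Cmod w). set (W1 := Cmod (w + 1)).
  assert (hW : (0 <= W)%R) by apply Cmod_ge_0. assert (hW1 : (0 <= W1)%R) by apply Cmod_ge_0.
  assert (hA : (0 <= A)%R) by apply Cmod_ge_0.
  set (e1 := Rmin 1 (eps / (3 * (1 + W)))).
  assert (he1 : (0 < e1)%R). { unfold e1. apply Rmin_pos; [lra|]. apply Rdiv_lt_0_compat; lra. }
  destruct (H0 e1 he1) as [N0 HN0]. destruct (H1 e1 he1) as [N1 HN1].
  destruct (INR_archimed (eps / 3) ((A + 1) * W1) ltac:(lra)) as [N2 HN2].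
  set (n := S (N0 + N1 + N2)).
  specialize (HN0 n ltac:(unfold n; lia)). specialize (HN1 n ltac:(unfold n; lia)).
  assert (hn : (1 <= n)%nat) by (unfold n; lia).
  assert (hn' : (0 < INR n)%R) by (apply lt_0_INR; lia).
  assert (hn2 : (INR N2 <= INR n)%R) by (apply le_INR; unfold n; lia).
  pose proof (Gn_succ n w hn ltac:(lra)) as E.
  assert (Hn0 : RtoC (INR n) <> 0) by (intro X; apply RtoC_inj in X; lra).
  assert (E'' : w * Gn n w = Gn n (w + 1) * (w + 1 + INR n) / INR n).
  { rewrite E. field. auto. }
  assert (E' : Gn n (w + 1) - w * Gn n w = - (Gn n (w + 1) * (w + 1) / INR n)).
  { rewrite E''. field. auto. }
  replace (Gamma (w + 1) - w * Gamma w) with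
    ((- (Gn n (w + 1) - Gamma (w + 1))) + (Gn n (w + 1) - w * Gn n w) + w * (Gn n w - Gamma w)) by ring.
  rewrite E'.
  assert (He1 : (e1 <= eps / (3 * (1 + W)))%R) by apply Rmin_r.
  assert (He2 : (e1 <= 1)%R) by apply Rmin_l.
  assert (Hg1 : (Cmod (Gn n (w + 1)) <= A + 1)%R).
  { replace (Gn n (w + 1)) with ((Gn n (w + 1) - Gamma (w + 1)) + Gamma (w + 1)) by ring.
    eapply Rle_trans. apply Cmod_triangle. fold A. lra. }
  assert (T2 : (Cmod (- (Gn n (w + 1) * (w + 1) / INR n)) <= (A + 1) * W1 / INR n)%R).
  { rewrite Cmod_opp, Cmod_div by auto. rewrite Cmod_mult, Cmod_R, Rabs_right by lra. fold W1.
    unfold Rdiv. apply Rmult_le_compat_r. left; apply Rinv_0_lt_compat; auto.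
    apply Rmult_le_compat_r; auto. }
  assert (T2' : ((A + 1) * W1 / INR n < eps / 3)%R).
  { apply (Rmult_lt_reg_r (INR n)); auto. unfold Rdiv. rewrite Rmult_assoc, Rinv_l by lra. nra. }
  assert (T3 : (Cmod (w * (Gn n w - Gamma w)) <= eps / 3)%R).
  { rewrite Cmod_mult. fold W.
    assert (W * e1 <= W * (eps / (3 * (1 + W))))%R by (apply Rmult_le_compat_l; lra).
    assert (W * (eps / (3 * (1 + W))) <= eps / 3)%R.
    { replace (W * (eps / (3 * (1 + W))))%R with ((eps/3) * (W / (1+W)))%R by (field; lra).
      assert (W / (1 + W) <= 1)%R.
      { apply (Rmult_le_reg_r (1 + W)); [lra|]. unfold Rdiv. rewrite Rmult_assoc, Rinv_l by lra. lra. }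
      assert (0 <= W / (1 + W))%R by (apply Rdiv_le_0_compat; lra).
      nra. }
    nra. }
  eapply Rle_trans. apply Cmod_triangle. eapply Rle_trans. apply Rplus_le_compat_r. apply Cmod_triangle.
  rewrite Cmod_opp.
  assert (Cmod (Gn n (w + 1) - Gamma (w + 1)) <= eps / 3)%R.
  { assert (e1 <= eps / 3)%R.
    { eapply Rle_trans. apply He1. unfold Rdiv. apply Rmult_le_compat_l; [lra|].
      apply Rinv_le_contravar; lra. }
    lra. }
  lra.
Qed.

Lemma Cmod2 (c : C) : (Cmod c ^ 2 = Re c ^ 2 + Im c ^ 2)%R.
Proof. apply Cmod2_alt. Qed.

Lemma half_ineq (a y : R) : (1 <= a)%R ->
  (((a + 1/2) ^ 2 + y ^ 2) * (a - 1/4) <= (a ^ 2 + y ^ 2) * (a + 3/4))%R.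
Proof. intros. nra. Qed.

Lemma Im_INR_add (w : C) (n : nat) : Im (w + INR n) = Im w.
Proof. destruct w; simpl; ring. Qed.

Lemma cprod_half (w : C) (n : nat) : (1 <= Re w)%R ->
  (Cmod (cprod (w + RtoC (1/2)) n) ^ 2 * (Re w - 1/4) <= Cmod (cprod w n) ^ 2 * (Re w + INR n + 3/4))%R.
Proof.
  intros hw. induction n.
  - simpl cprod. rewrite !Cmod2.
    replace (Re (w + RtoC (1/2))) with (Re w + 1/2)%R by (destruct w; simpl; ring).
    replace (Im (w + RtoC (1/2))) with (Im w) by (destruct w; simpl; ring).
    simpl INR. replace (Re w + 0 + 3/4)%R with (Re w + 3/4)%R by ring.
    apply half_ineq; auto.
  - change (cprod (w + RtoC (1/2)) (S n)) with (cprod (w + RtoC (1/2)) n * (w + RtoC (1/2) + INR (S n))).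
    change (cprod w (S n)) with (cprod w n * (w + INR (S n))).
    rewrite !Cmod_mult, !Rpow_mult_distr.
    set (A := (Cmod (cprod (w + RtoC (1/2)) n) ^ 2)%R). set (B := (Cmod (cprod w n) ^ 2)%R).
    assert (hA : (0 <= A)%R) by (apply pow2_ge_0). assert (hB : (0 <= B)%R) by (apply pow2_ge_0).
    rewrite !Cmod2. rewrite !Re_INR_add, !Im_INR_add.
    replace (Re (w + RtoC (1/2))) with (Re w + 1/2)%R by (destruct w; simpl; ring).
    replace (Im (w + RtoC (1/2))) with (Im w) by (destruct w; simpl; ring).
    pose proof (half_ineq (Re w + INR (S n)) (Im w) ltac:(pose proof (pos_INR (S n)); lra)) as Hh.
    rewrite S_INR in *.
    set (a := (Re w + (INR n + 1))%R) in *. set (y := Im w) in *.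
    assert (Hq : (0 <= (a + 1/2) ^ 2 + y ^ 2)%R) by (apply Rplus_le_le_0_compat; apply pow2_ge_0).
    assert (Hr : (0 <= a ^ 2 + y ^ 2)%R) by (apply Rplus_le_le_0_compat; apply pow2_ge_0).
    assert (E1 : (Re w + INR n + 1 / 2 + 1)%R = (a + 1/2)%R) by (unfold a; lra).
    replace (Re w + 1 / 2 + (INR n + 1))%R with (a + 1/2)%R by (unfold a; lra).
    replace (Re w + (INR n + 1) + 3 / 4)%R with (a + 3/4)%R by (unfold a; lra).
    replace (Re w + INR n + 3 / 4)%R with (a - 1/4)%R in IHn by (unfold a; lra).
    apply Rle_trans with (B * (a - 1/4) * ((a + 1/2) ^ 2 + y ^ 2))%R.
    + replace (A * ((a + 1 / 2) ^ 2 + y ^ 2) * (Re w - 1 / 4))%R with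
        (A * (Re w - 1 / 4) * ((a + 1 / 2) ^ 2 + y ^ 2))%R by ring.
      assert (IH' : (A * (Re w - 1/4) <= B * (a - 1/4))%R) by exact IHn.
      exact (Rmult_le_compat_r _ _ _ Hq IH').
    + replace (B * (a ^ 2 + y ^ 2) * (a + 3 / 4))%R with (B * ((a ^ 2 + y ^ 2) * (a + 3 / 4)))%R by ring.
      replace (B * (a - 1 / 4) * ((a + 1 / 2) ^ 2 + y ^ 2))%R with (B * (((a + 1 / 2) ^ 2 + y ^ 2) * (a - 1 / 4)))%R by ring.
      exact (Rmult_le_compat_l _ _ _ hB Hh).
Qed.

Lemma Gn_half (w : C) (n : nat) : (1 <= n)%nat -> (1 <= Re w)%R ->
  (Cmod (Gn n w) ^ 2 * (INR n * (Re w - 1/4)) <=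
   Cmod (Gn n (w + RtoC (1/2))) ^ 2 * (Re w + INR n + 3/4))%R.
Proof.
  intros hn hw. assert (hn' : (0 < INR n)%R) by (apply lt_0_INR; lia).
  assert (hA : cprod (w + RtoC (1/2)) n <> 0) by (apply cprod_nz; destruct w; simpl in *; lra).
  assert (hB : cprod w n <> 0) by (apply cprod_nz; lra).
  unfold Gn. rewrite !Cmod_div by auto. rewrite !Cmod_mult, !Cmod_cpowR, !Cmod_R.
  replace (Re (w + RtoC (1/2))) with (Re w + 1/2)%R by (destruct w; simpl; ring).
  pose proof (cprod_half w n hw) as H.
  set (A := Cmod (cprod (w + RtoC (1/2)) n)) in *. set (B := Cmod (cprod w n)) in *.
  assert (hA' : (0 < A)%R) by (apply Cmod_gt_0; auto).
  assert (hB' : (0 < B)%R) by (apply Cmod_gt_0; auto).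
  set (E := exp (Re w * ln (INR n))). set (F := Rabs (INR (fact n))).
  assert (Es : (exp ((Re w + 1/2) * ln (INR n)) ^ 2 = E ^ 2 * INR n)%R).
  { unfold E. rewrite !exp_pow_nat.
    transitivity (exp (INR 2 * (Re w * ln (INR n)) + ln (INR n))).
    - f_equal. simpl INR. field.
    - rewrite exp_plus, exp_ln; auto. }
  assert (hE : (0 < E)%R) by apply exp_pos.
  assert (hF : (0 <= F)%R) by apply Rabs_pos.
  replace (E * F / B)%R with (E * F * / B)%R by reflexivity.
  replace (exp ((Re w + 1 / 2) * ln (INR n)) * F / A)%R with (exp ((Re w + 1 / 2) * ln (INR n)) * F * / A)%R by reflexivity.
  rewrite !Rpow_mult_distr. rewrite Es.
  assert (Hg : ((Re w - 1/4) * / B ^ 2 <= (Re w + INR n + 3/4) * / A ^ 2)%R).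
  { apply (Rmult_le_reg_r (A ^ 2 * B ^ 2)). apply Rmult_lt_0_compat; apply pow_lt; auto.
    replace ((Re w - 1/4) * / B ^ 2 * (A ^ 2 * B ^ 2))%R with (A ^ 2 * (Re w - 1/4))%R by (field; lra).
    replace ((Re w + INR n + 3/4) * / A ^ 2 * (A ^ 2 * B ^ 2))%R with (B ^ 2 * (Re w + INR n + 3/4))%R by (field; lra).
    lra. }
  assert (hP : (0 <= E ^ 2 * F ^ 2 * INR n)%R) by (apply Rmult_le_pos; [apply Rmult_le_pos; apply pow2_ge_0|lra]).
  replace (E ^ 2 * F ^ 2 * (/ B) ^ 2 * (INR n * (Re w - 1 / 4)))%R with
    ((E ^ 2 * F ^ 2 * INR n) * ((Re w - 1/4) * / B ^ 2))%R by (field; lra).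
  replace (E ^ 2 * INR n * F ^ 2 * (/ A) ^ 2 * (Re w + INR n + 3 / 4))%R with
    ((E ^ 2 * F ^ 2 * INR n) * ((Re w + INR n + 3/4) * / A ^ 2))%R by (field; lra).
  apply Rmult_le_compat_l; auto.
Qed.

Lemma Gamma_half (w : C) : (2 <= Re w)%R ->
  (Cmod (Gamma w) ^ 2 * (Re w - 1/4) <= Cmod (Gamma (w + RtoC (1/2))) ^ 2)%R.
Proof.
  intros hw.
  pose proof (CV_Cmod _ _ (Gauss w hw)) as H0.
  pose proof (CV_Cmod _ _ (Gauss (w + RtoC (1/2)) ltac:(destruct w; simpl in *; lra))) as H1.
  assert (L0 : is_lim_seq (fun n => (Cmod (Gn n w) * Cmod (Gn n w) * (Re w - 1/4))%R)
                 (Cmod (Gamma w) * Cmod (Gamma w) * (Re w - 1/4))%R).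
  { apply is_lim_seq_mult'. apply is_lim_seq_mult'; auto. apply is_lim_seq_const. }
  assert (L1 : is_lim_seq (fun n => (Cmod (Gn n (w + RtoC (1/2))) * Cmod (Gn n (w + RtoC (1/2))) * ((Re w + 3/4 + INR n) / INR n))%R)
                 (Cmod (Gamma (w + RtoC (1/2))) * Cmod (Gamma (w + RtoC (1/2))) * 1)%R).
  { apply is_lim_seq_mult'. apply is_lim_seq_mult'; auto. apply lim_ratio. }
  assert (Ev : eventually (fun n => (Cmod (Gn n w) * Cmod (Gn n w) * (Re w - 1/4) <=
      Cmod (Gn n (w + RtoC (1/2))) * Cmod (Gn n (w + RtoC (1/2))) * ((Re w + 3/4 + INR n) / INR n))%R)).
  { exists 1%nat. intros n hn. pose proof (Gn_half w n hn ltac:(lra)) as G.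
    assert (hn' : (0 < INR n)%R) by (apply lt_0_INR; lia).
    apply (Rmult_le_reg_r (INR n)); auto.
    replace ((Cmod (Gn n w) * Cmod (Gn n w) * (Re w - 1 / 4)) * INR n)%R with
      (Cmod (Gn n w) ^ 2 * (INR n * (Re w - 1 / 4)))%R by ring.
    replace ((Cmod (Gn n (w + RtoC (1/2))) * Cmod (Gn n (w + RtoC (1/2))) * ((Re w + 3/4 + INR n) / INR n)) * INR n)%R with
      (Cmod (Gn n (w + RtoC (1/2))) ^ 2 * (Re w + INR n + 3/4))%R by (field; lra).
    exact G. }
  pose proof (is_lim_seq_le_loc _ _ _ _ Ev L0 L1) as H.
  simpl in H. nra.
Qed.

Fixpoint rp (x : R) (n : nat) : R :=
  match n with 0 => x | S m => (rp x m * (x + INR (S m)))%R end.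

Lemma rp_pos (x : R) (n : nat) : (0 < x)%R -> (0 < rp x n)%R.
Proof.
  intros hx. induction n; auto.
  change (rp x (S n)) with (rp x n * (x + INR (S n)))%R.
  apply Rmult_lt_0_compat; auto. pose proof (pos_INR (S n)). lra.
Qed.

Lemma sq_exp_aux (a y : R) : (2 <= a)%R -> (a ^ 2 + y ^ 2 <= a ^ 2 * exp (y ^ 2 * (/ (a - 1) - / a)))%R.
Proof.
  intros ha. pose proof (exp_ineq1_le (y ^ 2 * (/ (a - 1) - / a))).
  assert (E : (/ (a - 1) - / a = / (a * (a - 1)))%R) by (field; lra).
  rewrite E in *.
  assert (a ^ 2 * (1 + y ^ 2 * / (a * (a - 1))) = a ^ 2 + y ^ 2 * (a / (a - 1)))%R by (field; lra).
  assert (1 <= a / (a - 1))%R.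
  { apply (Rmult_le_reg_r (a - 1)); [lra|]. unfold Rdiv. rewrite Rmult_assoc, Rinv_l by lra. lra. }
  assert (0 <= y ^ 2)%R by apply pow2_ge_0.
  assert (0 <= a ^ 2)%R by apply pow2_ge_0.
  assert (a ^ 2 * (1 + y ^ 2 * / (a * (a - 1))) <= a ^ 2 * exp (y ^ 2 * / (a * (a - 1))))%R
    by (apply Rmult_le_compat_l; auto).
  nra.
Qed.

Lemma cprod_mod_le (w : C) (n : nat) : (2 <= Re w)%R ->
  (Cmod (cprod w n) ^ 2 <= rp (Re w) n ^ 2 * exp (Im w ^ 2 * (/ (Re w - 1) - / (Re w + INR n))))%R.
Proof.
  intros hw. induction n.
  - simpl cprod. simpl rp. rewrite Cmod2. simpl INR. rewrite Rplus_0_r. apply sq_exp_aux; auto.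
  - change (cprod w (S n)) with (cprod w n * (w + INR (S n))).
    change (rp (Re w) (S n)) with (rp (Re w) n * (Re w + INR (S n)))%R.
    rewrite Cmod_mult, Rpow_mult_distr, (Cmod2 (w + INR (S n))), Re_INR_add, Im_INR_add.
    pose proof (sq_exp_aux (Re w + INR (S n)) (Im w) ltac:(pose proof (pos_INR (S n)); lra)) as H.
    assert (E : (/ (Re w - 1) - / (Re w + INR (S n)) =
                 (/ (Re w - 1) - / (Re w + INR n)) + (/ (Re w + INR (S n) - 1) - / (Re w + INR (S n))))%R).
    { rewrite S_INR. pose proof (pos_INR n). field. lra. }
    rewrite E, (Rmult_plus_distr_l (Im w ^ 2)), exp_plus, (Rpow_mult_distr (rp (Re w) n)).
    assert (0 <= Cmod (cprod w n) ^ 2)%R by apply pow2_ge_0.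
    assert (0 <= (Re w + INR (S n)) ^ 2 + Im w ^ 2)%R by (apply Rplus_le_le_0_compat; apply pow2_ge_0).
    apply Rle_trans with (rp (Re w) n ^ 2 * exp (Im w ^ 2 * (/ (Re w - 1) - / (Re w + INR n))) *
                          ((Re w + INR (S n)) ^ 2 + Im w ^ 2))%R.
    + apply Rmult_le_compat_r; auto.
    + assert (0 <= rp (Re w) n ^ 2 * exp (Im w ^ 2 * (/ (Re w - 1) - / (Re w + INR n))))%R.
      { apply Rmult_le_pos. apply pow2_ge_0. left; apply exp_pos. }
      replace (rp (Re w) n ^ 2 * (Re w + INR (S n)) ^ 2 *
         (exp (Im w ^ 2 * (/ (Re w - 1) - / (Re w + INR n))) *
          exp (Im w ^ 2 * (/ (Re w + INR (S n) - 1) - / (Re w + INR (S n))))))%R with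
        ((rp (Re w) n ^ 2 * exp (Im w ^ 2 * (/ (Re w - 1) - / (Re w + INR n)))) *
         ((Re w + INR (S n)) ^ 2 * exp (Im w ^ 2 * (/ (Re w + INR (S n) - 1) - / (Re w + INR (S n))))))%R by ring.
      apply Rmult_le_compat_l; auto.
Qed.

Lemma ln_le_pred (q : R) : (0 < q)%R -> (ln q <= q - 1)%R.
Proof.
  intros hq. rewrite <- (ln_exp (q - 1)). apply ln_le; auto. pose proof (exp_ineq1_le (q - 1)). lra.
Qed.

Lemma real_gauss_lb (x : R) (m : nat) : (1 <= x)%R ->
  (/ (x * (x + 1)) <= exp (x * ln (INR (S m))) * INR (fact (S m)) / rp x (S m))%R.
Proof.
  intros hx. induction m.
  - simpl. rewrite ln_1, Rmult_0_r, exp_0. right. field. lra.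
  - set (N := INR (S m)).
    assert (hN : (0 < N)%R) by (apply lt_0_INR; lia).
    assert (E1 : INR (S (S m)) = (N + 1)%R) by (unfold N; rewrite S_INR; auto).
    change (rp x (S (S m))) with (rp x (S m) * (x + INR (S (S m))))%R.
    rewrite fact_simpl, mult_INR, E1.
    assert (hr : (0 < rp x (S m))%R) by (apply rp_pos; lra).
    assert (Hln : (/ (N + 1) <= ln (N + 1) - ln N)%R).
    { pose proof (ln_le_pred (N / (N + 1)) ltac:(apply Rdiv_lt_0_compat; lra)).
      rewrite ln_div in H by lra. replace (N / (N + 1) - 1)%R with (- / (N + 1))%R in H by (field; lra). lra. }
    assert (Hex : (exp (x * ln N) * (x + (N + 1)) <= exp (x * ln (N + 1)) * (N + 1))%R).
    { replace (x * ln (N + 1))%R with (x * ln N + x * (ln (N + 1) - ln N))%R by ring.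
      rewrite exp_plus. pose proof (exp_ineq1_le (x * (ln (N + 1) - ln N))).
      pose proof (exp_pos (x * ln N)).
      assert (x * / (N + 1) <= x * (ln (N + 1) - ln N))%R by (apply Rmult_le_compat_l; lra).
      assert (1 + x * / (N + 1) <= exp (x * (ln (N + 1) - ln N)))%R by lra.
      assert ((x + (N + 1)) = (1 + x * / (N + 1)) * (N + 1))%R by (field; lra).
      rewrite H3. rewrite <- Rmult_assoc. apply Rmult_le_compat_r; [lra|].
      apply Rmult_le_compat_l; lra. }
    fold N in IHm.
    eapply Rle_trans. apply IHm.
    assert (hF : (0 < INR (fact (S m)))%R) by (apply lt_0_INR, lt_O_fact).
    replace (exp (x * ln (N + 1)) * ((N + 1) * INR (fact (S m))) / (rp x (S m) * (x + (N + 1))))%R with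
      ((exp (x * ln (N + 1)) * (N + 1)) * (INR (fact (S m)) / (rp x (S m) * (x + (N + 1)))))%R by (field; lra).
    replace (exp (x * ln N) * INR (fact (S m)) / rp x (S m))%R with
      ((exp (x * ln N) * (x + (N + 1))) * (INR (fact (S m)) / (rp x (S m) * (x + (N + 1)))))%R by (field; lra).
    apply Rmult_le_compat_r; auto.
    apply Rlt_le, Rdiv_lt_0_compat; auto. apply Rmult_lt_0_compat; lra.
Qed.

Lemma Gn_lower (w : C) (m : nat) : (2 <= Re w)%R ->
  (exp (- (Im w ^ 2 / (Re w - 1))) * (/ (Re w * (Re w + 1))) ^ 2 <= Cmod (Gn (S m) w) ^ 2)%R.
Proof.
  intros hw. set (x := Re w) in *. set (y := Im w).
  pose proof (cprod_mod_le w (S m) hw) as H. fold x y in H.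
  pose proof (real_gauss_lb x m ltac:(lra)) as G.
  assert (hB : cprod w (S m) <> 0) by (apply cprod_nz; unfold x in hw; lra).
  assert (hB' : (0 < Cmod (cprod w (S m)))%R) by (apply Cmod_gt_0; auto).
  assert (hr : (0 < rp x (S m))%R) by (apply rp_pos; lra).
  unfold Gn. rewrite Cmod_div by auto. rewrite Cmod_mult, Cmod_cpowR, Cmod_R, Rabs_right.
  2:{ apply Rle_ge, pos_INR. }
  fold x.
  set (E := exp (x * ln (INR (S m)))). set (F := INR (fact (S m))). set (B := Cmod (cprod w (S m))) in *.
  fold E F in G.
  assert (hE : (0 < E)%R) by apply exp_pos.
  assert (hF : (0 < F)%R) by (apply lt_0_INR, lt_O_fact).
  assert (Hc : (exp (y ^ 2 * (/ (x - 1) - / (x + INR (S m)))) <= exp (y ^ 2 / (x - 1)))%R).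
  { assert (0 < / (x + INR (S m)))%R by (apply Rinv_0_lt_compat; pose proof (pos_INR (S m)); lra).
    assert (0 <= y ^ 2)%R by apply pow2_ge_0.
    destruct (Req_dec (y ^ 2 * (/ (x - 1) - / (x + INR (S m)))) (y ^ 2 / (x - 1))) as [Eq|Ne].
    - rewrite Eq; lra.
    - left; apply exp_increasing. unfold Rdiv. nra. }
  assert (HB2 : (B ^ 2 <= rp x (S m) ^ 2 * exp (y ^ 2 / (x - 1)))%R).
  { eapply Rle_trans. apply H. apply Rmult_le_compat_l; auto. apply pow2_ge_0. }
  assert (hg0 : (0 <= / (x * (x + 1)))%R) by (left; apply Rinv_0_lt_compat; nra).
  assert (G2 : ((/ (x * (x + 1))) ^ 2 <= (E * F / rp x (S m)) ^ 2)%R) by (apply pow_incr; lra).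
  assert (Eexp : exp (- (y ^ 2 / (x - 1))) = (/ exp (y ^ 2 / (x - 1)))%R) by apply exp_Ropp.
  rewrite Eexp.
  set (c := exp (y ^ 2 / (x - 1))) in *.
  assert (hc : (0 < c)%R) by apply exp_pos.
  apply Rle_trans with ((E * F / rp x (S m)) ^ 2 * / c)%R.
  { rewrite Rmult_comm. apply Rmult_le_compat_r; auto. left; apply Rinv_0_lt_compat; auto. }
  replace ((E * F / rp x (S m)) ^ 2 * / c)%R with ((E * F) ^ 2 / (rp x (S m) ^ 2 * c))%R by (field; lra).
  replace ((E * F / B) ^ 2)%R with ((E * F) ^ 2 / B ^ 2)%R by (field; lra).
  unfold Rdiv. apply Rmult_le_compat_l. apply pow2_ge_0.
  apply Rinv_le_contravar; auto. apply pow_lt; auto.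
Qed.

Lemma Gamma_nz (w : C) : (2 <= Re w)%R -> Gamma w <> 0.
Proof.
  intros hw E.
  set (m := (exp (- (Im w ^ 2 / (Re w - 1))) * (/ (Re w * (Re w + 1))) ^ 2)%R).
  assert (hm : (0 < m)%R).
  { unfold m. apply Rmult_lt_0_compat. apply exp_pos. apply pow_lt, Rinv_0_lt_compat. nra. }
  pose proof (CV_Cmod _ _ (Gauss w hw)) as H0.
  assert (L0 : is_lim_seq (fun n => (Cmod (Gn n w) * Cmod (Gn n w))%R) (Cmod (Gamma w) * Cmod (Gamma w))%R).
  { apply is_lim_seq_mult'; auto. }
  assert (Ev : eventually (fun n => (m <= Cmod (Gn n w) * Cmod (Gn n w))%R)).
  { exists 1%nat. intros n hn. destruct n; [lia|]. pose proof (Gn_lower w n hw). unfold m. simpl in H |- *. lra. }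
  pose proof (is_lim_seq_le_loc _ _ _ _ Ev (is_lim_seq_const m) L0) as H. simpl in H.
  rewrite E, Cmod_0 in H. lra.
Qed.

Definition za (s : C) (k : nat) : C := / cpowR (INR k + 1) s.

Lemma Cmod_za (s : C) (k : nat) : Cmod (za s k) = exp (- (Re s * ln (INR k + 1))).
Proof. unfold za. rewrite Cmod_inv by apply cpowR_nz. rewrite Cmod_cpowR, exp_Ropp. auto. Qed.

Lemma za_bound (s : C) (j : nat) : (3 <= Re s)%R ->
  (Cmod (za s (S j)) <= 8 * exp (- (Re s * ln 2)) / ((INR j + 2) * (INR j + 3)))%R.
Proof.
  intros hs. rewrite Cmod_za. set (x := Re s). rewrite S_INR.
  set (k := (INR j + 1 + 1)%R).
  assert (hj : (0 <= INR j)%R) by apply pos_INR.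
  assert (hk : (2 <= k)%R) by (unfold k; lra).
  replace (INR j + 2)%R with k by (unfold k; lra). replace (INR j + 3)%R with (k + 1)%R by (unfold k; lra).
  assert (Hl : (ln 2 <= ln k)%R) by (apply ln_le; lra).
  assert (E1 : exp (x * ln k) = (exp ((x - 3) * ln k) * k ^ 3)%R).
  { rewrite <- (exp_ln (k ^ 3)) by (apply pow_lt; lra). rewrite ln_pow by lra. rewrite <- exp_plus.
    f_equal. simpl INR. ring. }
  assert (E2 : (exp ((x - 3) * ln 2) * 8 = exp (x * ln 2))%R).
  { replace 8%R with (2 ^ 3)%R by ring. rewrite <- (exp_ln (2 ^ 3)) at 1 by lra. rewrite ln_pow by lra.
    rewrite <- exp_plus. f_equal. simpl INR. ring. }
  assert (H3 : (exp ((x - 3) * ln 2) <= exp ((x - 3) * ln k))%R).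
  { destruct (Req_dec ((x - 3) * ln 2) ((x - 3) * ln k)) as [E|E]. rewrite E; lra.
    left; apply exp_increasing. assert (0 <= x - 3)%R by (unfold x; lra). nra. }
  assert (H4 : (k * (k + 1) <= k ^ 3)%R) by nra.
  rewrite exp_Ropp. rewrite exp_Ropp. rewrite E1, <- E2.
  pose proof (exp_pos ((x - 3) * ln 2)). pose proof (exp_pos ((x - 3) * ln k)).
  assert (0 < k * (k + 1))%R by nra.
  replace (8 * / (exp ((x - 3) * ln 2) * 8) / (k * (k + 1)))%R with (/ (exp ((x - 3) * ln 2) * (k * (k + 1))))%R by (field; lra).
  apply Rinv_le_contravar. nra.
  apply Rmult_le_compat; lra.
Qed.

Lemma telescope_sum (N : nat) :
  sum_n (fun j => / ((INR j + 2) * (INR j + 3)))%R N = (/ 2 - / (INR N + 3))%R.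
Proof.
  induction N.
  - rewrite sum_O. simpl. field.
  - rewrite sum_Sn, IHN, S_INR. unfold plus; simpl. pose proof (pos_INR N). field. lra.
Qed.

Lemma tele_series : is_series (fun j => / ((INR j + 2) * (INR j + 3)))%R (/ 2)%R.
Proof.
  unfold is_series. change (is_lim_seq (sum_n (fun j => / ((INR j + 2) * (INR j + 3)))%R) (/ 2)%R).
  apply (is_lim_seq_ext (fun N => (/ 2 - / (INR N + 3))%R)).
  { intros; rewrite telescope_sum; auto. }
  assert (H : is_lim_seq (fun N => (/ 2 - / (INR N + 3))%R) (/ 2 - 0)%R).
  { apply is_lim_seq_minus'. apply is_lim_seq_const.
    replace (Finite 0) with (Rbar_inv p_infty) by reflexivity.
    apply is_lim_seq_inv; [|discriminate].
    replace p_infty with (Rbar_plus p_infty 3) by reflexivity.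
    apply is_lim_seq_plus with p_infty 3. apply is_lim_seq_INR. apply is_lim_seq_const.
    reflexivity. }
  replace (/ 2 - 0)%R with (/ 2)%R in H by ring. exact H.
Qed.

Lemma za_ex (s : C) : (3 <= Re s)%R -> ex_series (V:=C_NormedModule) (za s).
Proof.
  intros hs. apply (ex_series_incr_1 (V:=C_NormedModule)).
  apply (ex_series_le (V:=C_CompleteNormedModule) _ (fun j => 8 * exp (- (Re s * ln 2)) * / ((INR j + 2) * (INR j + 3)))%R).
  - intros j. match goal with |- (_ <= ?b)%R => change (Cmod (za s (S j)) <= b)%R end. unfold Rdiv in *. pose proof (za_bound s j hs). unfold Rdiv in H. exact H.
  - exists (8 * exp (- (Re s * ln 2)) * / 2)%R.
    apply (is_series_scal_l (K:=R_AbsRing) (V:=R_NormedModule)). apply tele_series.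
Qed.

Lemma zeta_is (s : C) : (3 <= Re s)%R -> is_series (V:=C_NormedModule) (za s) (zeta s).
Proof.
  intros hs. unfold zeta.
  apply (iota_correct (K:=C_AbsRing) (V:=C_CompleteNormedModule)
           (fun l : C => is_series (V:=C_NormedModule) (fun n : nat => / cpowR (INR n + 1) s) l)).
  destruct (za_ex s hs) as [l Hl]. exists l. split; auto.
  intros l' Hl'. apply (filterlim_locally_unique (K:=C_AbsRing) (V:=C_NormedModule) (F:=eventually) (sum_n (za s))); auto.
Qed.

Lemma za_0 (s : C) : za s 0 = 1.
Proof.
  unfold za. replace (INR 0 + 1)%R with 1%R by (simpl; ring).
  assert (H : cpowR 1 s = 1). { rewrite cpowR_eq, ln_1, !Rmult_0_r, exp_0, cos_0, sin_0, !Rmult_1_l. reflexivity. }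
  rewrite H. field.
Qed.

Lemma series_bound (a : nat -> C) (l : C) (B : R) :
  is_series (V:=C_NormedModule) a l -> (forall N, Cmod (sum_n a N) <= B)%R -> (Cmod l <= B)%R.
Proof.
  intros Hs HB. destruct (Rle_dec (Cmod l) B) as [h|h]; auto. exfalso.
  assert (he : (0 < (Cmod l - B) / 4)%R) by lra.
  specialize (Hs (ball l ((Cmod l - B) / 4)) (locally_ball l (mkposreal _ he))).
  destruct Hs as [N HN]. specialize (HN N (Nat.le_refl N)). simpl in HN.
  apply ball_C_to in HN. specialize (HB N).
  pose proof (Cmod_triangle (sum_n a N) (- (sum_n a N - l))).
  replace (sum_n a N + - (sum_n a N - l)) with l in H by ring. rewrite Cmod_opp in H. apply Rnot_le_lt in h. set (S := sum_n a N) in *. change (Cmod (S - l) < 2 * ((Cmod l - B) / 4))%R in HN. lra.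
Qed.

Lemma zeta_bound (s : C) : (3 <= Re s)%R -> (Cmod (zeta s - 1) <= 4 * exp (- (Re s * ln 2)))%R.
Proof.
  intros hs. pose proof (zeta_is s hs) as H.
  assert (H1 : is_series (V:=C_NormedModule) (fun k => za s (S k)) (zeta s - 1)).
  { apply (is_series_incr_1 (V:=C_NormedModule)). 
    replace (@plus C_NormedModule (zeta s - 1) (za s 0)) with (zeta s); auto.
    rewrite za_0. change (zeta s = zeta s - 1 + 1). ring. }
  apply (series_bound _ _ _ H1). intros N.
  set (c := exp (- (Re s * ln 2))).
  assert (hc : (0 < c)%R) by apply exp_pos.
  apply Rle_trans with (8 * c * (/ 2 - / (INR N + 3)))%R.
  2:{ assert (0 < / (INR N + 3))%R by (apply Rinv_0_lt_compat; pose proof (pos_INR N); lra). nra. }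
  induction N.
  - rewrite sum_O. eapply Rle_trans. apply za_bound; auto. fold c. simpl INR. right. field.
  - rewrite sum_Sn. change (Cmod (sum_n (fun k => za s (S k)) N + za s (S (S N))) <= 8 * c * (/ 2 - / (INR (S N) + 3)))%R.
    eapply Rle_trans. apply Cmod_triangle. eapply Rle_trans. apply Rplus_le_compat. apply IHN. apply za_bound; auto.
    fold c. rewrite S_INR. pose proof (pos_INR N). right. field. lra.
Qed.

Lemma chi_mod (u : C) : Cmod (chi u) =
  (Cmod u * Cmod (u - 1) * exp (Re (- u / 2) * ln PI) * Cmod (Gamma (u / 2)) * Cmod (zeta u))%R.
Proof. unfold chi, xi. rewrite !Cmod_mult, Cmod_cpowR. ring. Qed.

Lemma exp_le_mono (a b : R) : (a <= b)%R -> (exp a <= exp b)%R.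
Proof. intros H. destruct (Rle_lt_or_eq_dec a b H) as [h|h]. left; apply exp_increasing; auto. rewrite h; lra. Qed.

Lemma zeta_mod (u : C) : (18 <= Re u)%R ->
  (999/1000 <= Cmod (zeta u) <= 1001/1000)%R.
Proof.
  intros hu. pose proof (zeta_bound u ltac:(lra)) as H.
  assert (E : (exp (- (Re u * ln 2)) <= / 2 ^ 18)%R).
  { rewrite <- (exp_ln (2 ^ 18)) by (apply pow_lt; lra). rewrite <- exp_Ropp. rewrite ln_pow by lra.
    assert (0 < ln 2)%R by (rewrite <- ln_1; apply ln_increasing; lra).
    apply exp_le_mono. replace (INR 18) with 18%R by (simpl; ring). nra. }
  assert (4 * / 2 ^ 18 < 1/1000)%R by (simpl; lra).
  pose proof (Cmod_triangle (zeta u - 1) 1). replace (zeta u - 1 + 1) with (zeta u) in H1 by ring.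
  pose proof (Cmod_triangle (- (zeta u - 1)) (zeta u)). replace (- (zeta u - 1) + zeta u) with (RtoC 1) in H2 by ring.
  rewrite Cmod_opp in H2. rewrite Cmod_1 in H1, H2. lra.
Qed.

Lemma Re_div2 (u : C) : Re (u / 2) = (Re u / 2)%R.
Proof. destruct u as [a b]. unfold Cdiv, Cinv, Cmult; simpl. field. Qed.

Lemma Cmod_ge_Re' (u : C) : (Re u <= Cmod u)%R.
Proof. apply Cmod_ge_Re. Qed.

Section RealPart12.
Local Open Scope R_scope.

Ltac pos_tac := unfold Rdiv; repeat first [apply Rmult_le_pos | apply Rmult_lt_0_compat | apply pow2_ge_0 | apply pow_lt | apply Rinv_0_lt_compat | (apply Rlt_le; apply Rinv_0_lt_compat)]; try lra; try nra.
Ltac mono := repeat (apply Rmult_le_compat; [pos_tac | pos_tac | | ]); try lra.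

Lemma real_main (ms m1 m2 m3 p1 p2 mh a b e P Q G0 H K D z2s z2s1 zs2 zs1 zs zsm1 zsm2 r1 r2
                 T1 T2 T3 T4 T5 T6 : R) :
  0 < ms -> 0 < m1 -> 0 < m2 -> 0 < m3 -> 0 < mh -> 0 < e -> 0 < P -> 0 < Q -> 0 < G0 -> 0 < K ->
  0 <= H -> 0 <= D -> 0 <= b ->
  e * e <= 4 -> 20 <= ms -> 19 <= m1 -> 21 <= p1 -> 22 <= p2 -> m3 <= m1 -> m3 <= m2 -> ms <= p2 ->
  b <= a -> 3 <= a -> 32/10 <= r1 -> 438/100 <= r2 -> H * r1 <= ms / 2 * G0 -> D * r2 <= K ->
  999/1000 <= z2s <= 1001/1000 -> 999/1000 <= z2s1 <= 1001/1000 -> 999/1000 <= zs2 <= 1001/1000 ->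
  999/1000 <= zs1 <= 1001/1000 -> 999/1000 <= zs <= 1001/1000 -> 999/1000 <= zsm1 <= 1001/1000 ->
  999/1000 <= zsm2 <= 1001/1000 ->
  T1 = m2 * (2 * ms * mh * Q * K * z2s) * a * m1 ^ 2 * (p2 * p1 * (P / (e * e)) * (ms / 2 * G0) * zs2) ->
  T2 = 2 * m1 * m3 * (p1 * ms * (P / e) * H * zs1) * (m2 * (2 * ms * mh * Q * K * z2s)) ->
  T3 = p2 * m3 * (ms * m1 * P * G0 * zs) * (m2 * (2 * ms * mh * Q * K * z2s)) ->
  T4 = p1 * (mh * (2 * m1) * (Q * e) * D * z2s1) * b * ms ^ 2 * (m2 * m3 * (P * (e * e)) * (G0 / (m2 / 2)) * zsm2) ->
  T5 = p1 * (mh * (2 * m1) * (Q * e) * D * z2s1) * (2 * ms * p2) * (m1 * m2 * (P * e) * (H / (m1 / 2)) * zsm1) ->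
  T6 = p1 * (mh * (2 * m1) * (Q * e) * D * z2s1) * (p2 * m3) * (ms * m1 * P * G0 * zs) ->
  T2 + T3 + T4 + T5 + T6 < T1.
Proof.
  intros hms hm1 hm2 hm3 hmh he hP hQ hG0 hK hH hD hb he2 hms' hm1' hp1 hp2 h31 h32 hsp2 hba ha hr1 hr2
    HH HD [z1a z1b] [z2a z2b] [z3a z3b] [z4a z4b] [z5a z5b] [z6a z6b] [z7a z7b] E1 E2 E3 E4 E5 E6.
  assert (hp1' : 0 < p1) by lra. assert (hp2' : 0 < p2) by lra. assert (ha' : 0 < a) by lra.
  assert (he2' : e <= 2) by nra.
  assert (hT1 : 0 < T1).
  { rewrite E1. unfold Rdiv. repeat apply Rmult_lt_0_compat; try lra; try (apply pow_lt; lra);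
    try (apply Rinv_0_lt_compat; nra). }
  assert (HH' : H <= ms * G0 / (2 * r1)).
  { apply (Rmult_le_reg_r r1). lra. replace (ms * G0 / (2 * r1) * r1) with (ms / 2 * G0) by (field; lra). lra. }
  assert (HD' : D <= K / r2).
  { apply (Rmult_le_reg_r r2). lra. replace (K / r2 * r2) with K by (field; lra). lra. }
  assert (hr1' : 0 < r1) by lra. assert (hr2' : 0 < r2) by lra.
  assert (F2 : T2 <= 45/100 * T1).
  { set (Cc := m2 * ms ^ 2 * mh * Q * K * z2s * m1 * p1 * P / (e * e)).
    assert (hC : 0 <= Cc) by (unfold Cc; pos_tac).
    replace T2 with (Cc * (4 * e * m3 * H * zs1)) by (rewrite E2; unfold Cc; field; lra).
    replace (45/100 * T1) with (Cc * (45/100 * a * m1 * p2 * G0 * zs2)) by (rewrite E1; unfold Cc; field; lra).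
    apply Rmult_le_compat_l; auto.
    apply Rle_trans with (4 * 2 * m1 * (ms * G0 / (2 * r1)) * (1001/1000)).
    { mono. }
    apply Rle_trans with (45/100 * 3 * m1 * ms * G0 * (999/1000)).
    2:{ mono. }
    assert (1 / r1 <= 10/32). { apply (Rmult_le_reg_r r1); auto. replace (1 / r1 * r1) with 1 by (field; lra). lra. }
    replace (4 * 2 * m1 * (ms * G0 / (2 * r1)) * (1001 / 1000)) with ((m1 * ms * G0) * (4 * 1001/1000 * (1 / r1))) by (field; lra).
    replace (45 / 100 * 3 * m1 * ms * G0 * (999 / 1000)) with ((m1 * ms * G0) * (45/100 * 3 * (999/1000))) by ring.
    apply Rmult_le_compat_l. pos_tac. lra. }
  assert (hee : 0 < e * e) by nra.
  assert (hi4 : / 4 <= / (e * e)) by (apply Rinv_le_contravar; lra).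
  assert (ir1 : 1 / r1 <= 10/32). { apply (Rmult_le_reg_r r1); auto. replace (1 / r1 * r1) with 1 by (field; lra). lra. }
  assert (ir2 : 1 / r2 <= 100/438). { apply (Rmult_le_reg_r r2); auto. replace (1 / r2 * r2) with 1 by (field; lra). lra. }
  assert (ir12 : 1 / (r1 * r2) <= 10/32 * (100/438)).
  { replace (1 / (r1 * r2)) with ((1 / r1) * (1 / r2)) by (field; lra).
    apply Rmult_le_compat; try lra; pos_tac. }
  assert (F3 : T3 <= 14/100 * T1).
  { set (Cc := m2 * ms ^ 2 * mh * Q * K * z2s * m1 * P * G0).
    assert (hC : 0 <= Cc) by (unfold Cc; pos_tac).
    replace T3 with (Cc * (2 * p2 * m3 * zs)) by (rewrite E3; unfold Cc; field; lra).
    replace (14/100 * T1) with (Cc * (14/100 * a * m1 * p2 * p1 * zs2 * / (e * e))) by (rewrite E1; unfold Cc; field; lra).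
    apply Rmult_le_compat_l; auto.
    apply Rle_trans with (2 * p2 * m1 * (1001/1000)). { mono. }
    apply Rle_trans with (14/100 * 3 * m1 * p2 * 21 * (999/1000) * / 4).
    2:{ mono. }
    replace (2 * p2 * m1 * (1001 / 1000)) with ((m1 * p2) * (2 * (1001/1000))) by ring.
    replace (14 / 100 * 3 * m1 * p2 * 21 * (999 / 1000) * / 4) with ((m1 * p2) * (14/100 * 3 * 21 * (999/1000) / 4)) by field.
    apply Rmult_le_compat_l. pos_tac. lra. }
  assert (F4 : T4 <= 8/100 * T1).
  { set (Cc := mh * Q * ms ^ 2 * m1 * p1 * P * G0 / (e * e)).
    assert (hC : 0 <= Cc) by (unfold Cc; pos_tac).
    replace T4 with (Cc * (4 * e * e * e * e * e * D * z2s1 * b * m3 * zsm2)) by (rewrite E4; unfold Cc; field; lra).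
    replace (8/100 * T1) with (Cc * (8/100 * m2 * K * z2s * a * m1 * p2 * zs2)) by (rewrite E1; unfold Cc; field; lra).
    apply Rmult_le_compat_l; auto.
    apply Rle_trans with (4 * 2 * 2 * 2 * 2 * 2 * (K / r2) * (1001/1000) * a * m2 * (1001/1000)). { mono. }
    apply Rle_trans with (8/100 * m2 * K * (999/1000) * a * 19 * 22 * (999/1000)).
    2:{ mono. }
    replace (4 * 2 * 2 * 2 * 2 * 2 * (K / r2) * (1001 / 1000) * a * m2 * (1001 / 1000)) with
      ((a * m2 * K) * (128 * (1001/1000) * (1001/1000) * (1 / r2))) by (field; lra).
    replace (8 / 100 * m2 * K * (999 / 1000) * a * 19 * 22 * (999 / 1000)) with
      ((a * m2 * K) * (8/100 * (999/1000) * 19 * 22 * (999/1000))) by ring.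
    apply Rmult_le_compat_l. pos_tac. lra. }
  assert (F5 : T5 <= 9/100 * T1).
  { set (Cc := p1 * mh * m1 * Q * ms * m2 * P / (e * e)).
    assert (hC : 0 <= Cc) by (unfold Cc; pos_tac).
    replace T5 with (Cc * (8 * e * e * e * e * D * z2s1 * p2 * H * zsm1)) by (rewrite E5; unfold Cc; field; lra).
    replace (9/100 * T1) with (Cc * (9/100 * ms * K * z2s * a * m1 * p2 * G0 * zs2)) by (rewrite E1; unfold Cc; field; lra).
    apply Rmult_le_compat_l; auto.
    apply Rle_trans with (8 * 2 * 2 * 2 * 2 * (K / r2) * (1001/1000) * p2 * (ms * G0 / (2 * r1)) * (1001/1000)). { mono. }
    apply Rle_trans with (9/100 * ms * K * (999/1000) * 3 * 19 * p2 * G0 * (999/1000)).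
    2:{ mono. }
    replace (8 * 2 * 2 * 2 * 2 * (K / r2) * (1001 / 1000) * p2 * (ms * G0 / (2 * r1)) * (1001 / 1000)) with
      ((ms * K * p2 * G0) * (64 * (1001/1000) * (1001/1000) * (1 / (r1 * r2)))) by (field; lra).
    replace (9 / 100 * ms * K * (999 / 1000) * 3 * 19 * p2 * G0 * (999 / 1000)) with
      ((ms * K * p2 * G0) * (9/100 * (999/1000) * 3 * 19 * (999/1000))) by ring.
    apply Rmult_le_compat_l. pos_tac. lra. }
  assert (F6 : T6 <= 7/100 * T1).
  { set (Cc := p1 * mh * m1 ^ 2 * Q * p2 * ms * P * G0 / (e * e)).
    assert (hC : 0 <= Cc) by (unfold Cc; pos_tac).
    replace T6 with (Cc * (2 * e * e * e * D * z2s1 * m3 * zs)) by (rewrite E6; unfold Cc; field; lra).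
    replace (7/100 * T1) with (Cc * (7/100 * m2 * ms * K * z2s * a * zs2)) by (rewrite E1; unfold Cc; field; lra).
    apply Rmult_le_compat_l; auto.
    apply Rle_trans with (2 * 2 * 2 * 2 * (K / r2) * (1001/1000) * m2 * (1001/1000)). { mono. }
    apply Rle_trans with (7/100 * m2 * 20 * K * (999/1000) * 3 * (999/1000)).
    2:{ mono. }
    replace (2 * 2 * 2 * 2 * (K / r2) * (1001 / 1000) * m2 * (1001 / 1000)) with
      ((m2 * K) * (16 * (1001/1000) * (1001/1000) * (1 / r2))) by (field; lra).
    replace (7 / 100 * m2 * 20 * K * (999 / 1000) * 3 * (999 / 1000)) with
      ((m2 * K) * (7/100 * 20 * (999/1000) * 3 * (999/1000))) by ring.
    apply Rmult_le_compat_l. pos_tac. lra. }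
  lra.
Qed.

End RealPart12.

Lemma C2_nz : (2 : C) <> 0.
Proof. intro H. apply RtoC_inj in H. lra. Qed.

Lemma Cmod_2mul (z : C) : Cmod (2 * z) = (2 * Cmod z)%R.
Proof. rewrite Cmod_mult, Cmod_R, Rabs_right; lra. Qed.

Lemma Cmod_div2 (z : C) : Cmod (z / 2) = (Cmod z / 2)%R.
Proof. rewrite Cmod_div by apply C2_nz. rewrite Cmod_R, Rabs_right; lra. Qed.

Lemma Re_exp (s : C) (u : C) (c : R) : Re (- u / 2) = c -> exp (Re (- u / 2) * ln PI) = exp (c * ln PI).
Proof. intros H; rewrite H; auto. Qed.

Lemma exp_split (c d L : R) : exp ((c + d) * L) = (exp (c * L) * exp (d * L))%R.
Proof. rewrite <- exp_plus. f_equal. ring. Qed.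

Section Facts.
Variable s : C.
Hypothesis hs : (20 <= Re s)%R.

Let x := Re s.
Let L := ln PI.
Let e := exp (L / 2).
Let P := exp ((- x / 2) * L).
Let Q := exp ((- x) * L).

Lemma ee_PI : (e * e = PI)%R.
Proof. unfold e. rewrite <- exp_plus. replace (L / 2 + L / 2)%R with L by field. unfold L. apply exp_ln, PI_RGT_0. Qed.

Lemma e_pos : (0 < e)%R. Proof. apply exp_pos. Qed.

Lemma expL_m1 : exp ((-1) * L) = (/ (e * e))%R.
Proof. rewrite ee_PI. replace ((-1) * L)%R with (- L)%R by ring. rewrite exp_Ropp. unfold L. rewrite exp_ln; auto. apply PI_RGT_0. Qed.
Lemma expL_mh : exp ((-1/2) * L) = (/ e)%R.
Proof. unfold e. rewrite <- exp_Ropp. f_equal. field. Qed.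
Lemma expL_ph : exp ((1/2) * L) = e.
Proof. unfold e. f_equal. field. Qed.
Lemma expL_p1 : exp (1 * L) = (e * e)%R.
Proof. rewrite ee_PI. rewrite Rmult_1_l. unfold L. apply exp_ln, PI_RGT_0. Qed.

Ltac re_tac := destruct s as [sx sy]; unfold x; simpl; field.

Lemma chi_2s : Cmod (chi (2 * s)) = (2 * Cmod s * Cmod (2 * s - 1) * Q * Cmod (Gamma s) * Cmod (zeta (2 * s)))%R.
Proof.
  rewrite chi_mod, Cmod_2mul.
  replace (2 * s / 2) with s by (field; apply C2_nz).
  replace (Re (- (2 * s) / 2)) with (- x)%R by re_tac. fold L. unfold Q. ring.
Qed.

Lemma chi_2s1 : Cmod (chi (2 * s - 1)) =
  (Cmod (2 * s - 1) * (2 * Cmod (s - 1)) * (Q * e) * Cmod (Gamma (s - RtoC (1/2))) * Cmod (zeta (2 * s - 1)))%R.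
Proof.
  rewrite chi_mod. replace (2 * s - 1 - 1) with (2 * (s - 1)) by ring. rewrite Cmod_2mul.
  replace ((2 * s - 1) / 2) with (s - RtoC (1/2)) by (rewrite RtoC_div by (intro; lra); field; apply C2_nz).
  replace (Re (- (2 * s - 1) / 2)) with (- x + 1/2)%R by re_tac. fold L. rewrite exp_split, expL_ph. unfold Q. ring.
Qed.

Lemma Gs2 : Gamma ((s + 2) / 2) = s / 2 * Gamma (s / 2).
Proof.
  replace ((s + 2) / 2) with (s / 2 + 1) by (field; apply C2_nz).
  apply Gamma_succ. rewrite Re_div2. lra.
Qed.

Lemma chi_s2 : Cmod (chi (s + 2)) =
  (Cmod (s + 2) * Cmod (s + 1) * (P / (e * e)) * (Cmod s / 2 * Cmod (Gamma (s / 2))) * Cmod (zeta (s + 2)))%R.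
Proof.
  rewrite chi_mod. replace (s + 2 - 1) with (s + 1) by ring. rewrite Gs2, Cmod_mult, Cmod_div2.
  replace (Re (- (s + 2) / 2)) with (- x / 2 + (-1))%R by re_tac. fold L. rewrite exp_split, expL_m1. unfold P. unfold Rdiv. ring.
Qed.

Lemma chi_s1 : Cmod (chi (s + 1)) =
  (Cmod (s + 1) * Cmod s * (P / e) * Cmod (Gamma (s / 2 + RtoC (1/2))) * Cmod (zeta (s + 1)))%R.
Proof.
  rewrite chi_mod. replace (s + 1 - 1) with s by ring.
  replace ((s + 1) / 2) with (s / 2 + RtoC (1/2)) by (rewrite RtoC_div by (intro; lra); field; apply C2_nz).
  replace (Re (- (s + 1) / 2)) with (- x / 2 + (-1/2))%R by re_tac. fold L. rewrite exp_split, expL_mh. unfold P. unfold Rdiv. ring.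
Qed.

Lemma chi_s0 : Cmod (chi s) = (Cmod s * Cmod (s - 1) * P * Cmod (Gamma (s / 2)) * Cmod (zeta s))%R.
Proof.
  rewrite chi_mod. replace (Re (- s / 2)) with (- x / 2)%R by re_tac. fold L. unfold P. ring.
Qed.

Lemma Gsm1 : Gamma (s / 2 + RtoC (1/2)) = (s - 1) / 2 * Gamma ((s - 1) / 2).
Proof.
  replace (s / 2 + RtoC (1/2)) with ((s - 1) / 2 + 1) by (rewrite RtoC_div by (intro; lra); field; apply C2_nz).
  apply Gamma_succ. rewrite Re_div2. replace (Re (s - 1)) with (Re s - 1)%R by re_tac. lra.
Qed.

Lemma chi_sm1 : Cmod (chi (s - 1)) =
  (Cmod (s - 1) * Cmod (s - 2) * (P * e) * (Cmod (Gamma (s / 2 + RtoC (1/2))) / (Cmod (s - 1) / 2)) * Cmod (zeta (s - 1)))%R.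
Proof.
  assert (h1 : Cmod (s - 1) <> 0%R).
  { intro E. apply Cmod_eq_0 in E. assert (Re (s - 1) = 0%R) by (rewrite E; auto).
    replace (Re (s - 1)) with (Re s - 1)%R in H by re_tac. lra. }
  rewrite chi_mod. replace (s - 1 - 1) with (s - 2) by ring.
  rewrite Gsm1, Cmod_mult, Cmod_div2.
  replace (Re (- (s - 1) / 2)) with (- x / 2 + 1/2)%R by re_tac. fold L. rewrite exp_split, expL_ph. unfold P.
  field. auto.
Qed.

Lemma Gsm2 : Gamma (s / 2) = (s - 2) / 2 * Gamma ((s - 2) / 2).
Proof.
  replace (s / 2) with ((s - 2) / 2 + 1) at 1 by (field; apply C2_nz).
  apply Gamma_succ. rewrite Re_div2. replace (Re (s - 2)) with (Re s - 2)%R by re_tac. lra.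
Qed.

Lemma chi_sm2 : Cmod (chi (s - 2)) =
  (Cmod (s - 2) * Cmod (s - 3) * (P * (e * e)) * (Cmod (Gamma (s / 2)) / (Cmod (s - 2) / 2)) * Cmod (zeta (s - 2)))%R.
Proof.
  assert (h1 : Cmod (s - 2) <> 0%R).
  { intro E. apply Cmod_eq_0 in E. assert (Re (s - 2) = 0%R) by (rewrite E; auto).
    replace (Re (s - 2)) with (Re s - 2)%R in H by re_tac. lra. }
  rewrite chi_mod. replace (s - 2 - 1) with (s - 3) by ring.
  rewrite Gsm2. rewrite Cmod_mult, Cmod_div2.
  replace (Re (- (s - 2) / 2)) with (- x / 2 + 1)%R by re_tac. fold L. rewrite exp_split, expL_p1. unfold P.
  field. auto.
Qed.

End Facts.

Lemma sq_le (u v : R) : (0 <= u)%R -> (0 <= v)%R -> (u ^ 2 <= v ^ 2)%R -> (u <= v)%R.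
Proof. intros. nra. Qed.

Lemma Cmod_le_sq (z w : C) : (Cmod z ^ 2 <= Cmod w ^ 2)%R -> (Cmod z <= Cmod w)%R.
Proof. intros. apply sq_le; auto; apply Cmod_ge_0. Qed.

Lemma tri6 (a b c d f g : C) :
  (Cmod a - Cmod b - Cmod c - Cmod d - Cmod f - Cmod g <= Cmod (a - b - c - d - f - g))%R.
Proof.
  pose proof (Cmod_triangle (a - b - c - d - f - g) (b + c + d + f + g)).
  replace (a - b - c - d - f - g + (b + c + d + f + g)) with a in H by ring.
  pose proof (Cmod_triangle (b + c + d + f) g). pose proof (Cmod_triangle (b + c + d) f).
  pose proof (Cmod_triangle (b + c) d). pose proof (Cmod_triangle b c). lra.
Qed.

Lemma sqrt_ge (c v : R) : (0 <= c)%R -> (c ^ 2 <= v)%R -> (c <= sqrt v)%R.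
Proof.
  intros hc hv. rewrite <- (sqrt_pow2 c hc). apply sqrt_le_1_alt. auto.
Qed.

Theorem proposition6p4 :
  forall s : C, (20 <= Re s)%R -> Z2 s <> 0.
Proof.
  intros s hs HZ.
  set (x := Re s). set (y := Im s).
  assert (ReS : forall k : R, Re (s + RtoC k) = (x + k)%R) by (intros; unfold x; destruct s; simpl; ring).
  assert (ImS : forall k : R, Im (s + RtoC k) = y) by (intros; unfold y; destruct s; simpl; ring).
  assert (Mk : forall k : R, (Cmod (s + RtoC k) ^ 2 = (x + k) ^ 2 + y ^ 2)%R) by (intros; rewrite Cmod2, ReS, ImS; auto).
  assert (Ms : (Cmod s ^ 2 = x ^ 2 + y ^ 2)%R) by (rewrite Cmod2; auto).
  assert (Em1 : s - 1 = s + RtoC (-1)) by (unfold Cminus, Copp, RtoC; simpl; f_equal; f_equal; lra).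
  assert (Em2 : s - 2 = s + RtoC (-2)) by (unfold Cminus, Copp, RtoC; simpl; f_equal; f_equal; lra).
  assert (Em3 : s - 3 = s + RtoC (-3)) by (unfold Cminus, Copp, RtoC; simpl; f_equal; f_equal; lra).
  assert (Lk : forall k : R, (x + k <= Cmod (s + RtoC k))%R) by (intros; rewrite <- ReS; apply Cmod_ge_Re).
  assert (hm1 : (19 <= Cmod (s - 1))%R) by (rewrite Em1; pose proof (Lk (-1)%R); unfold x in *; lra).
  assert (hm2 : (18 <= Cmod (s - 2))%R) by (rewrite Em2; pose proof (Lk (-2)%R); unfold x in *; lra).
  assert (hm3 : (17 <= Cmod (s - 3))%R) by (rewrite Em3; pose proof (Lk (-3)%R); unfold x in *; lra).
  assert (hp1 : (21 <= Cmod (s + 1))%R) by (pose proof (Lk 1%R); unfold x in *; lra).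
  assert (hp2 : (22 <= Cmod (s + 2))%R) by (pose proof (Lk 2%R); unfold x in *; lra).
  assert (hms : (20 <= Cmod s)%R) by (pose proof (Cmod_ge_Re s); unfold x in *; lra).
  assert (hmh : (0 < Cmod (2 * s - 1))%R).
  { apply Cmod_gt_0. intro E. assert (Re (2 * s - 1) = 0%R) by (rewrite E; auto).
    replace (Re (2 * s - 1)) with (2 * x - 1)%R in H by (unfold x; destruct s; simpl; ring). unfold x in *; lra. }
  assert (h31 : (Cmod (s - 3) <= Cmod (s - 1))%R).
  { apply Cmod_le_sq. rewrite Em1, Em3, !Mk. unfold x in *; nra. }
  assert (h32 : (Cmod (s - 3) <= Cmod (s - 2))%R).
  { apply Cmod_le_sq. rewrite Em2, Em3, !Mk. unfold x in *; nra. }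
  assert (hsp2 : (Cmod s <= Cmod (s + 2))%R).
  { apply Cmod_le_sq. rewrite Ms, Mk. unfold x in *; nra. }
  assert (hPI3 : (3 < PI)%R) by (pose proof PI2_3_2; lra).
  assert (hPI4 : (PI <= 4)%R) by apply PI_4.
  set (al := (PI / 3 - 1)%R).
  assert (hal : (0 <= al)%R) by (unfold al; lra).
  assert (ReA : Re (A * s + 3) = (al * x + 3)%R) by (unfold A, al, x; destruct s; simpl; ring).
  assert (ImA : Im (A * s + 3) = (al * y)%R) by (unfold A, al, y; destruct s; simpl; ring).
  assert (ReB : Re (A * s - A - 3) = (al * (x - 1) - 3)%R) by (unfold A, al, x; destruct s; simpl; ring).
  assert (ImB : Im (A * s - A - 3) = (al * y)%R) by (unfold A, al, y; destruct s; simpl; ring).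
  assert (ha : (3 <= Cmod (A * s + 3))%R).
  { pose proof (Cmod_ge_Re (A * s + 3)). rewrite ReA in H. unfold x in *. nra. }
  assert (hba : (Cmod (A * s - A - 3) <= Cmod (A * s + 3))%R).
  { apply Cmod_le_sq. rewrite !Cmod2, ReA, ImA, ReB, ImB. unfold x in *. nra. }
  assert (hG0 : (0 < Cmod (Gamma (s / 2)))%R).
  { apply Cmod_gt_0, Gamma_nz. rewrite Re_div2. unfold x in *; lra. }
  assert (hK : (0 < Cmod (Gamma s))%R) by (apply Cmod_gt_0, Gamma_nz; unfold x in *; lra).
  assert (HH : (Cmod (Gamma (s / 2 + RtoC (1/2))) * sqrt (x / 2 + 1/4) <= Cmod s / 2 * Cmod (Gamma (s / 2)))%R).
  { assert (Rw : Re (s / 2 + RtoC (1/2)) = (x/2 + 1/2)%R) by (rewrite re_plus, Re_div2, re_RtoC; unfold x; lra).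
    pose proof (Gamma_half (s / 2 + RtoC (1/2)) ltac:(rewrite Rw; unfold x in *; lra)) as G.
    replace (s / 2 + RtoC (1/2) + RtoC (1/2)) with (s / 2 + 1) in G.
    2:{ rewrite <- Cplus_assoc, <- RtoC_plus. f_equal. f_equal. field. }
    rewrite Gamma_succ in G by (rewrite Re_div2; unfold x in *; lra).
    rewrite Cmod_mult, Cmod_div2, Rw in G.
    apply sq_le. apply Rmult_le_pos; [apply Cmod_ge_0| apply sqrt_pos].
    apply Rmult_le_pos; [|apply Cmod_ge_0]. pose proof (Cmod_ge_0 s). lra.
    rewrite Rpow_mult_distr, pow2_sqrt by (unfold x in *; lra).
    replace (x / 2 + 1 / 2 - 1 / 4)%R with (x / 2 + 1/4)%R in G by field.
    exact G. }
  assert (HD : (Cmod (Gamma (s - RtoC (1/2))) * sqrt (x - 3/4) <= Cmod (Gamma s))%R).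
  { assert (Rw : Re (s - RtoC (1/2)) = (x - 1/2)%R) by (unfold x; destruct s; simpl; ring).
    pose proof (Gamma_half (s - RtoC (1/2)) ltac:(rewrite Rw; unfold x in *; lra)) as G.
    replace (s - RtoC (1/2) + RtoC (1/2)) with s in G by ring.
    rewrite Rw in G.
    apply sq_le. apply Rmult_le_pos; [apply Cmod_ge_0| apply sqrt_pos]. apply Cmod_ge_0.
    rewrite Rpow_mult_distr, pow2_sqrt by (unfold x in *; lra).
    replace (x - 1 / 2 - 1 / 4)%R with (x - 3/4)%R in G by field. exact G. }
  assert (hr1 : (32/10 <= sqrt (x / 2 + 1/4))%R) by (apply sqrt_ge; unfold x in *; lra).
  assert (hr2 : (438/100 <= sqrt (x - 3/4))%R) by (apply sqrt_ge; unfold x in *; lra).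
  assert (RZ : forall u : C, (18 <= Re u)%R -> (999/1000 <= Cmod (zeta u) <= 1001/1000)%R) by apply zeta_mod.
  assert (Z2s : (999/1000 <= Cmod (zeta (2 * s)) <= 1001/1000)%R).
  { apply RZ. replace (Re (2 * s)) with (2 * x)%R by (unfold x; destruct s; simpl; ring). unfold x in *; lra. }
  assert (Z2s1 : (999/1000 <= Cmod (zeta (2 * s - 1)) <= 1001/1000)%R).
  { apply RZ. replace (Re (2 * s - 1)) with (2 * x - 1)%R by (unfold x; destruct s; simpl; ring). unfold x in *; lra. }
  assert (Zs2 : (999/1000 <= Cmod (zeta (s + 2)) <= 1001/1000)%R) by (apply RZ; rewrite ReS; unfold x in *; lra).
  assert (Zs1 : (999/1000 <= Cmod (zeta (s + 1)) <= 1001/1000)%R) by (apply RZ; rewrite ReS; unfold x in *; lra).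
  assert (Zs0 : (999/1000 <= Cmod (zeta s) <= 1001/1000)%R) by (apply RZ; unfold x in *; lra).
  assert (Zsm1 : (999/1000 <= Cmod (zeta (s - 1)) <= 1001/1000)%R) by (apply RZ; rewrite Em1, ReS; unfold x in *; lra).
  assert (Zsm2 : (999/1000 <= Cmod (zeta (s - 2)) <= 1001/1000)%R) by (apply RZ; rewrite Em2, ReS; unfold x in *; lra).
  set (T1c := (s - 2) * chi (2 * s) * (A * s + 3) * (s - 1) ^ 2 * chi (s + 2)).
  set (T2c := 2 * (s - 1) * (s - 3) * chi (s + 1) * ((s - 2) * chi (2 * s))).
  set (T3c := (s + 2) * (s - 3) * chi s * ((s - 2) * chi (2 * s))).
  set (T4c := (s + 1) * chi (2 * s - 1) * (A * s - A - 3) * s ^ 2 * chi (s - 2)).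
  set (T5c := (s + 1) * chi (2 * s - 1) * (2 * s * (s + 2)) * chi (s - 1)).
  set (T6c := (s + 1) * chi (2 * s - 1) * ((s + 2) * (s - 3)) * chi s).
  assert (EZ : Z2 s = T1c - T2c - T3c - T4c - T5c - T6c)
    by (unfold Z2, T1c, T2c, T3c, T4c, T5c, T6c; ring).
  pose proof (tri6 T1c T2c T3c T4c T5c T6c) as TR. rewrite <- EZ, HZ, Cmod_0 in TR.
  unfold x, y in *.
  assert (C2m : Cmod 2 = 2%R) by (rewrite Cmod_R, Rabs_right; lra).
  assert (Hlt : (Cmod T2c + Cmod T3c + Cmod T4c + Cmod T5c + Cmod T6c < Cmod T1c)%R).
  { eapply (real_main (Cmod s) (Cmod (s - 1)) (Cmod (s - 2)) (Cmod (s - 3)) (Cmod (s + 1)) (Cmod (s + 2))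
      (Cmod (2 * s - 1)) (Cmod (A * s + 3)) (Cmod (A * s - A - 3)) (exp (ln PI / 2))
      (exp ((- Re s / 2) * ln PI)) (exp ((- Re s) * ln PI))
      (Cmod (Gamma (s / 2))) (Cmod (Gamma (s / 2 + RtoC (1/2)))) (Cmod (Gamma s)) (Cmod (Gamma (s - RtoC (1/2))))
      (Cmod (zeta (2 * s))) (Cmod (zeta (2 * s - 1))) (Cmod (zeta (s + 2))) (Cmod (zeta (s + 1)))
      (Cmod (zeta s)) (Cmod (zeta (s - 1))) (Cmod (zeta (s - 2)))
      (sqrt (Re s / 2 + 1/4)) (sqrt (Re s - 3/4))); try lra; try apply exp_pos; try apply Cmod_ge_0.
    - rewrite ee_PI. lra.
    - unfold T1c. rewrite !Cmod_mult, Cmod_pow, (chi_2s s hs), (chi_s2 s hs). ring.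
    - unfold T2c. rewrite !Cmod_mult, C2m, (chi_2s s hs), (chi_s1 s hs). ring.
    - unfold T3c. rewrite !Cmod_mult, (chi_2s s hs), (chi_s0 s hs). ring.
    - unfold T4c. rewrite !Cmod_mult, Cmod_pow, (chi_2s1 s hs), (chi_sm2 s hs). ring.
    - unfold T5c. rewrite !Cmod_mult, C2m, (chi_2s1 s hs), (chi_sm1 s hs). ring.
    - unfold T6c. rewrite !Cmod_mult, (chi_2s1 s hs), (chi_s0 s hs). ring. }
  lra.
Qed.
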